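(* If $n_1<n_2<n_3\neq N/2$, then the geometric realization of $C(n_1,n_2,n_3)$ is homeomorphic to a disjoint union of tori (one for each of its $\gcd(n_1,n_2,n_3)$ components).
   Context: Standing conventions: $N,n_1,n_2,n_3$ are positive integers with $n_1+n_2+n_3=N$ and $1\le n_1\le n_2\le n_3<N$. $C(n_1,n_2,n_3)$ denotes the abstract simplicial complex whose vertex set is $\mathbb{Z}/N$, whose 2-simplices are all sets of the form $\{k,k+n_1,k+n_1+n_2\}$ or $\{k,k-n_1,k-n_1-n_2\}$ for $k\in\mathbb{Z}/N$ (i.e. the orbit of $\{0,n_1,n_1+n_2\}$ under all translations $x\mapsto x+t$ and inversions $x\mapsto t-x$ of $\mathbb{Z}/N$), and whose 1-simplices are all sets $\{k,k+n_i\}$ with $k\in\mathbb{Z}/N$, $i\in\{1,2,3\}$. *)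

(* Defs.v *)
From Stdlib Require Import Reals Arith List.
Open Scope R_scope.

(* The vertex sets of the 2-simplices: the orbit of {0,n1,n1+n2} under
   translations and inversions of Z/N, i.e. {k,k+n1,k+n1+n2} and {k,k-n1,k-n1-n2}. *)
Definition is_triangle (N n1 n2 : nat) (v : nat -> Prop) : Prop :=
  exists k, (k < N)%nat /\
    ((forall i, v i <-> (i = k \/ i = (k + n1) mod N \/ i = (k + n1 + n2) mod N))
  \/ (forall i, v i <-> (i = k \/ i = (k + (N - n1)) mod N
                           \/ i = (k + (N - n1) + (N - n2)) mod N))).

Definition is_edge (N n1 n2 n3 : nat) (v : nat -> Prop) : Prop :=
  exists k, (k < N)%nat /\ exists m, (m = n1 \/ m = n2 \/ m = n3) /\
    (forall i, v i <-> (i = k \/ i = (k + m) mod N)).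

Definition is_vertex (N : nat) (v : nat -> Prop) : Prop :=
  exists k, (k < N)%nat /\ (forall i, v i <-> i = k).

Definition is_simplex (N n1 n2 n3 : nat) (v : nat -> Prop) : Prop :=
  is_triangle N n1 n2 v \/ is_edge N n1 n2 n3 v \/ is_vertex N v.

Fixpoint rsum (n : nat) (f : nat -> R) : R :=
  match n with O => 0 | S m => rsum m f + f m end.

(* Geometric realization |C(n1,n2,n3)| inside R^N (points are coordinate
   functions nat -> R vanishing from index N on): barycentric coordinates
   supported on a simplex. *)
Definition realization (N n1 n2 n3 : nat) (x : nat -> R) : Prop :=
  (forall i, (N <= i)%nat -> x i = 0) /\
  (forall i, 0 <= x i) /\
  rsum N x = 1 /\
  exists v, is_simplex N n1 n2 n3 v /\ (forall i, x i <> 0 -> v i).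

Definition distN (N : nat) (x y : nat -> R) : R := rsum N (fun i => Rabs (x i - y i)).

(* A point is (k, (a,b,c,d)) with k < g indexing the component and
   (a,b),(c,d) on the unit circle: the k-th copy of S^1 x S^1. *)
Definition tori_pt : Type := (nat * (R * R * R * R))%type.

Definition tori (g : nat) (p : tori_pt) : Prop :=
  match p with (k, (a, b, c, d)) =>
    (k < g)%nat /\ a * a + b * b = 1 /\ c * c + d * d = 1 end.

(* Metric inducing the disjoint-union topology (distinct copies at distance >= 1). *)
Definition tori_dist (p q : tori_pt) : R :=
  match p, q with (k, (a, b, c, d)), (k', (a', b', c', d')) =>
    (if Nat.eqb k k' then 0 else 1)
    + Rabs (a - a') + Rabs (b - b') + Rabs (c - c') + Rabs (d - d') end.

Definition cont_on {A B : Type} (dA : A -> A -> R) (dB : B -> B -> R)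
  (S : A -> Prop) (f : A -> B) : Prop :=
  forall x, S x -> forall eps, 0 < eps -> exists delta, 0 < delta /\
    forall y, S y -> dA x y < delta -> dB (f x) (f y) < eps.

Definition homeomorphic {A B : Type} (dA : A -> A -> R) (dB : B -> B -> R)
  (S : A -> Prop) (T : B -> Prop) : Prop :=
  exists (f : A -> B) (h : B -> A),
    (forall x, S x -> T (f x)) /\ (forall y, T y -> S (h y)) /\
    (forall x, S x -> h (f x) = x) /\ (forall y, T y -> f (h y) = y) /\
    cont_on dA dB S f /\ cont_on dB dA T h.

(* Main.v *)
Require Import Defs.
From Stdlib Require Import Reals Lra Lia ZArith Znumtheory Arith List Permutation Classical FunctionalExtensionality ClassicalEpsilon.
Open Scope R_scope.
Import ListNotations.

Module SA.
Open Scope R_scope.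
Import ListNotations.

Definition pt := (Z * Z)%type.
Definition lsum (L : list pt) (F : pt -> R) : R :=
  fold_right (fun q acc => F q + acc) 0 L.

Lemma lsum_app L1 L2 F : lsum (L1 ++ L2) F = lsum L1 F + lsum L2 F.
Proof. induction L1; simpl; [lra|rewrite IHL1; lra]. Qed.

Lemma lsum_perm L1 L2 F : Permutation L1 L2 -> lsum L1 F = lsum L2 F.
Proof. induction 1; simpl; lra. Qed.

Lemma lsum_ext L F G : (forall q, In q L -> F q = G q) -> lsum L F = lsum L G.
Proof. induction L; simpl; intros H; [lra|]. rewrite H by auto. rewrite IHL by auto. lra. Qed.

Lemma lsum_nonneg L F : (forall q, 0 <= F q) -> 0 <= lsum L F.
Proof. intros H; induction L; simpl; [lra|]. specialize (H a); lra. Qed.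

Lemma lsum_plus L F G : lsum L (fun q => F q + G q) = lsum L F + lsum L G.
Proof. induction L; simpl; lra. Qed.

Lemma lsum_zero L F : (forall q, In q L -> F q = 0) -> lsum L F = 0.
Proof. induction L; simpl; intros H; [lra|]. rewrite H by auto. rewrite IHL by auto. lra. Qed.

Lemma lsum_abs L F : Rabs (lsum L F) <= lsum L (fun q => Rabs (F q)).
Proof. induction L; simpl. rewrite Rabs_R0; lra.
  eapply Rle_trans. apply Rabs_triang. lra. Qed.

Lemma lsum_le L F G : (forall q, In q L -> F q <= G q) -> lsum L F <= lsum L G.
Proof. induction L; simpl; intros H; [lra|]. assert (F a <= G a) by auto.
  assert (lsum L F <= lsum L G) by auto. lra. Qed.

Lemma lsum_pos_ex L F : (forall q, 0 <= F q) -> 0 < lsum L F -> exists q, In q L /\ 0 < F q.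
Proof. induction L; simpl; intros H1 H2; [lra|].
  destruct (Rlt_dec 0 (F a)) as [h|h]. exists a; auto.
  destruct IHL as [q [? ?]]; auto. specialize (H1 a). lra. exists q; auto. Qed.

Definition nzb (F : pt -> R) (q : pt) : bool := if Req_EM_T (F q) 0 then false else true.

Lemma lsum_filter L F : lsum L F = lsum (filter (nzb F) L) F.
Proof. induction L; simpl; auto. unfold nzb at 1. destruct (Req_EM_T (F a) 0).
  rewrite e, IHL; lra. simpl. rewrite IHL; auto. Qed.

Lemma SUMLEM L1 L2 F : NoDup L1 -> NoDup L2 ->
  (forall q, F q <> 0 -> In q L1 /\ In q L2) -> lsum L1 F = lsum L2 F.
Proof. intros N1 N2 H. rewrite (lsum_filter L1), (lsum_filter L2).
  apply lsum_perm. apply NoDup_Permutation; try apply NoDup_filter; auto.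
  intros q; rewrite !filter_In; unfold nzb; destruct (Req_EM_T (F q) 0); split; intros [A B]; try discriminate;
  split; auto; apply H; auto. Qed.

Lemma rsum_ext n f g : (forall i, (i < n)%nat -> f i = g i) -> rsum n f = rsum n g.
Proof. induction n; simpl; intros H; auto. rewrite IHn by auto. rewrite H by lia. auto. Qed.

Lemma rsum_plus n f g : rsum n (fun i => f i + g i) = rsum n f + rsum n g.
Proof. induction n; simpl; lra. Qed.

Lemma rsum_zero n : rsum n (fun _ => 0) = 0.
Proof. induction n; simpl; lra. Qed.

Lemma rsum_ind n l c : (l < n)%nat -> rsum n (fun i => if Nat.eqb l i then c else 0) = c.
Proof. induction n; simpl; intros H; [lia|].
  destruct (Nat.eq_dec l n). subst. rewrite Nat.eqb_refl.
  rewrite (rsum_ext _ _ (fun _ => 0)). rewrite rsum_zero; lra.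
  intros i Hi. destruct (Nat.eqb_spec n i); [lia|auto].
  rewrite IHn by lia. destruct (Nat.eqb_spec l n); [lia|lra]. Qed.

Lemma rsum_lsum n L G : rsum n (fun i => lsum L (G i)) = lsum L (fun q => rsum n (fun i => G i q)).
Proof. induction L; simpl. apply rsum_zero. rewrite rsum_plus, IHL. auto. Qed.

Lemma rsum_le n f g : (forall i, (i < n)%nat -> f i <= g i) -> rsum n f <= rsum n g.
Proof. induction n; simpl; intros H; [lra|]. assert (f n <= g n) by (apply H; lia).
  assert (rsum n f <= rsum n g) by auto. lra. Qed.

Lemma rsum_nonneg n f : (forall i, 0 <= f i) -> 0 <= rsum n f.
Proof. intros H; induction n; simpl; [lra|]. specialize (H n); lra. Qed.

Lemma rsum_term n f l : (forall i, 0 <= f i) -> (l < n)%nat -> f l <= rsum n f.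
Proof. induction n; simpl; intros H Hl; [lia|]. pose proof (rsum_nonneg n f H).
  destruct (Nat.eq_dec l n). subst; lra. pose proof (IHn H ltac:(lia)). specialize (H n). lra. Qed.

Lemma dist_term N x y l : (l < N)%nat -> Rabs (x l - y l) <= distN N x y.
Proof. intros; unfold distN. apply (rsum_term N (fun i => Rabs (x i - y i))); auto.
  intros; apply Rabs_pos. Qed.

Lemma rsum_three N x a b c : (a < N)%nat -> (b < N)%nat -> (c < N)%nat -> a <> b -> a <> c -> b <> c ->
  (forall i, x i <> 0 -> i = a \/ i = b \/ i = c) ->
  rsum N x = x a + x b + x c.
Proof. intros. rewrite (rsum_ext N x (fun i => (if Nat.eqb a i then x a else 0) +
   ((if Nat.eqb b i then x b else 0) + (if Nat.eqb c i then x c else 0)))).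
  rewrite !rsum_plus, !rsum_ind by auto. lra.
  intros i Hi. destruct (Nat.eqb_spec a i), (Nat.eqb_spec b i), (Nat.eqb_spec c i); subst; try lia; try lra.
  destruct (Req_EM_T (x i) 0) as [E|E]; [lra|]. destruct (H5 i E) as [?|[?|?]]; lia. Qed.

Definition hat (s t : R) : R := Rmax 0 (1 - Rmax (Rabs s) (Rmax (Rabs t) (Rabs (s - t)))).

Ltac rmax_step :=
  match goal with
  | |- context [Rabs ?x] => destruct (Rcase_abs x); [rewrite (Rabs_left x) by assumption | rewrite (Rabs_right x) by assumption]
  | |- context [Rmax ?a ?b] =>
      lazymatch a with context [Rmax _ _] => fail | _ =>
      lazymatch b with context [Rmax _ _] => fail | _ =>
      destruct (Rle_lt_dec a b); [rewrite (Rmax_right a b) by lra | rewrite (Rmax_left a b) by lra] end end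
  end.
Ltac hat_goal := unfold hat; repeat rmax_step; lra.
Ltac hat_crush := unfold hat in *;
  repeat match goal with
  | H : context [hat _ _] |- _ => unfold hat in H
  | H : context [Rabs ?x] |- _ => revert H
  | H : context [Rmax _ _] |- _ => revert H
  end; repeat rmax_step; intros; lra.

Lemma hat_nonneg s t : 0 <= hat s t.
Proof. unfold hat, Rmax; destruct (Rle_dec _ _); lra. Qed.

Lemma hat_pos_bounds s t : 0 < hat s t -> -1 < s < 1 /\ -1 < t < 1 /\ -1 < s - t < 1.
Proof. intros; hat_crush. Qed.

End SA.
Import SA.

Module SB.
Open Scope R_scope.
Import ListNotations.

Lemma Rmax_lip a b c d : Rabs (Rmax a b - Rmax c d) <= Rabs (a - c) + Rabs (b - d).
Proof. unfold Rmax; destruct (Rle_dec a b), (Rle_dec c d);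
  repeat match goal with |- context [Rabs ?x] => destruct (Rcase_abs x); [rewrite (Rabs_left x) by assumption | rewrite (Rabs_right x) by assumption] end; lra. Qed.

Lemma Rabs_lip a b : Rabs (Rabs a - Rabs b) <= Rabs (a - b).
Proof. apply Rabs_triang_inv2. Qed.

Lemma hat_lip a b c d : Rabs (hat a b - hat c d) <= 2 * (Rabs (a - c) + Rabs (b - d)).
Proof. unfold hat.
  set (X := Rmax (Rabs a) (Rmax (Rabs b) (Rabs (a - b)))).
  set (Y := Rmax (Rabs c) (Rmax (Rabs d) (Rabs (c - d)))).
  pose proof (Rmax_lip 0 (1 - X) 0 (1 - Y)) as H0.
  replace (0-0) with 0 in H0 by ring. rewrite Rabs_R0 in H0.
  replace (1 - X - (1 - Y)) with (- (X - Y)) in H0 by ring. rewrite Rabs_Ropp in H0.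
  pose proof (Rmax_lip (Rabs a) (Rmax (Rabs b) (Rabs (a - b))) (Rabs c) (Rmax (Rabs d) (Rabs (c - d)))) as H1.
  fold X Y in H1.
  pose proof (Rmax_lip (Rabs b) (Rabs (a-b)) (Rabs d) (Rabs (c-d))).
  pose proof (Rabs_lip a c). pose proof (Rabs_lip b d). pose proof (Rabs_lip (a-b) (c-d)).
  assert (Rabs (a - b - (c - d)) <= Rabs (a - c) + Rabs (b-d)).
  { replace (a - b - (c-d)) with ((a-c) + - (b-d)) by ring. eapply Rle_trans. apply Rabs_triang. rewrite Rabs_Ropp; lra. }
  pose proof (Rabs_pos (a-c)). pose proof (Rabs_pos (b-d)). lra. Qed.

Lemma star_id s t : 0 < hat s t ->
  s = hat (s-1) t - hat (s+1) t + hat (s-1) (t-1) - hat (s+1) (t+1) /\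
  t = hat s (t-1) - hat s (t+1) + hat (s-1) (t-1) - hat (s+1) (t+1).
Proof. intros H. pose proof (hat_pos_bounds _ _ H) as [[? ?] [[? ?] [? ?]]].
  destruct (Rle_dec 0 s), (Rle_dec 0 t), (Rle_dec t s).
  - assert (hat (s-1) t = s - t) by hat_goal. assert (hat (s+1) t = 0) by hat_goal.
    assert (hat (s-1) (t-1) = t) by hat_goal. assert (hat (s+1) (t+1) = 0) by hat_goal.
    assert (hat s (t-1) = 0) by hat_goal. assert (hat s (t+1) = 0) by hat_goal. lra.
  - assert (hat (s-1) t = 0) by hat_goal. assert (hat (s+1) t = 0) by hat_goal.
    assert (hat (s-1) (t-1) = s) by hat_goal. assert (hat (s+1) (t+1) = 0) by hat_goal.
    assert (hat s (t-1) = t - s) by hat_goal. assert (hat s (t+1) = 0) by hat_goal. lra.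
  - assert (hat (s-1) t = s) by hat_goal. assert (hat (s+1) t = 0) by hat_goal.
    assert (hat (s-1) (t-1) = 0) by hat_goal. assert (hat (s+1) (t+1) = 0) by hat_goal.
    assert (hat s (t-1) = 0) by hat_goal. assert (hat s (t+1) = -t) by hat_goal. lra.
  - lra.
  - lra.
  - assert (hat (s-1) t = 0) by hat_goal. assert (hat (s+1) t = -s) by hat_goal.
    assert (hat (s-1) (t-1) = 0) by hat_goal. assert (hat (s+1) (t+1) = 0) by hat_goal.
    assert (hat s (t-1) = t) by hat_goal. assert (hat s (t+1) = 0) by hat_goal. lra.
  - assert (hat (s-1) t = 0) by hat_goal. assert (hat (s+1) t = 0) by hat_goal.
    assert (hat (s-1) (t-1) = 0) by hat_goal. assert (hat (s+1) (t+1) = -s) by hat_goal.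
    assert (hat s (t-1) = 0) by hat_goal. assert (hat s (t+1) = s - t) by hat_goal. lra.
  - assert (hat (s-1) t = 0) by hat_goal. assert (hat (s+1) t = t - s) by hat_goal.
    assert (hat (s-1) (t-1) = 0) by hat_goal. assert (hat (s+1) (t+1) = -t) by hat_goal.
    assert (hat s (t-1) = 0) by hat_goal. assert (hat s (t+1) = 0) by hat_goal. lra.
Qed.

Lemma Zcases (a : Z) : (a <= -1)%Z \/ a = 0%Z \/ a = 1%Z \/ (2 <= a)%Z.
Proof. lia. Qed.

Definition upv (al be : Z) (u w : R) : R :=
  if (Z.eqb al 0 && Z.eqb be 0)%bool then 1 - u else
  if (Z.eqb al 1 && Z.eqb be 0)%bool then u - w else
  if (Z.eqb al 1 && Z.eqb be 1)%bool then w else 0.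

Definition dnv (al be : Z) (u w : R) : R :=
  if (Z.eqb al 0 && Z.eqb be 0)%bool then 1 - w else
  if (Z.eqb al 0 && Z.eqb be 1)%bool then w - u else
  if (Z.eqb al 1 && Z.eqb be 1)%bool then u else 0.

Ltac zcase a := destruct (Zcases a) as [?|[?|[?|?]]];
  [ match goal with H : (a <= -1)%Z |- _ => pose proof (IZR_le _ _ H) end
  | subst a | subst a
  | match goal with H : (2 <= a)%Z |- _ => pose proof (IZR_le _ _ H) end ].

Lemma hat_up u w al be : 0 <= w -> w <= u -> u <= 1 ->
  hat (u - IZR al) (w - IZR be) = upv al be u w.
Proof. intros. unfold upv.
  zcase al; zcase be; simpl;
  repeat match goal with |- context [Z.eqb ?x ?y] => destruct (Z.eqb_spec x y); try lia end; simpl;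
  hat_goal. Qed.

Lemma hat_dn u w al be : 0 <= u -> u <= w -> w <= 1 ->
  hat (u - IZR al) (w - IZR be) = dnv al be u w.
Proof. intros. unfold dnv.
  zcase al; zcase be; simpl;
  repeat match goal with |- context [Z.eqb ?x ?y] => destruct (Z.eqb_spec x y); try lia end; simpl;
  hat_goal. Qed.

End SB.
Import SB.

Module SC.
Open Scope R_scope.
Import ListNotations.

Definition fl (x : R) : Z := (up x - 1)%Z.

Lemma fl_spec x : IZR (fl x) <= x < IZR (fl x) + 1.
Proof. unfold fl. destruct (archimed x). rewrite minus_IZR. simpl. lra. Qed.

Lemma IZR_int_bounds (a : Z) (x : R) : x - 1 < IZR a -> IZR a < x + 1 -> IZR (fl x) <= x < IZR (fl x) + 1 ->
  a = fl x \/ a = (fl x + 1)%Z.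
Proof. intros H1 H2 [H3 H4].
  assert (IZR (fl x) - 1 < IZR a) by lra. assert (IZR a < IZR (fl x) + 2) by lra.
  replace (IZR (fl x) - 1) with (IZR (fl x - 1)) in H by (rewrite minus_IZR; simpl; ring).
  replace (IZR (fl x) + 2) with (IZR (fl x + 2)) in H0 by (rewrite plus_IZR; simpl; ring).
  apply lt_IZR in H. apply lt_IZR in H0. lia. Qed.

Definition corners (s t : R) : list pt :=
  let a := fl s in let b := fl t in [(a,b); (a+1,b)%Z; (a,b+1)%Z; (a+1,b+1)%Z].

Lemma corners_nodup s t : NoDup (corners s t).
Proof. unfold corners. repeat constructor; simpl; intros H;
  repeat (destruct H as [H|H]; [injection H; lia|]); auto. Qed.

Lemma hat_corner s t q : hat (s - IZR (fst q)) (t - IZR (snd q)) <> 0 -> In q (corners s t).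
Proof. intros H. assert (0 < hat (s - IZR (fst q)) (t - IZR (snd q))) by (pose proof (hat_nonneg (s - IZR (fst q)) (t - IZR (snd q))); lra).
  apply hat_pos_bounds in H0. destruct q as [a b]; simpl in *.
  destruct (IZR_int_bounds a s ltac:(lra) ltac:(lra) (fl_spec s)) as [Ea|Ea];
  destruct (IZR_int_bounds b t ltac:(lra) ltac:(lra) (fl_spec t)) as [Eb|Eb]; subst; unfold corners; simpl; tauto. Qed.

Lemma hat_up' a b x y u w : 0 <= w -> w <= u -> u <= 1 ->
  hat (IZR a + u - IZR x) (IZR b + w - IZR y) = upv (x - a) (y - b) u w.
Proof. intros. rewrite <- hat_up by auto. rewrite !minus_IZR. f_equal; ring. Qed.
Lemma hat_dn' a b x y u w : 0 <= u -> u <= w -> w <= 1 ->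
  hat (IZR a + u - IZR x) (IZR b + w - IZR y) = dnv (x - a) (y - b) u w.
Proof. intros. rewrite <- hat_dn by auto. rewrite !minus_IZR. f_equal; ring. Qed.

Section Plane.
Variables N n1 n2 : nat.
Hypothesis HN : (0 < N)%nat.

Definition labZ (c : nat) (q : pt) : Z :=
  ((Z.of_nat c + fst q * Z.of_nat n1 + snd q * Z.of_nat n2) mod Z.of_nat N)%Z.
Definition lab (c : nat) (q : pt) : nat := Z.to_nat (labZ c q).

Lemma labZ_range c q : (0 <= labZ c q < Z.of_nat N)%Z.
Proof. unfold labZ. apply Z.mod_pos_bound. lia. Qed.

Lemma lab_lt c q : (lab c q < N)%nat.
Proof. unfold lab. pose proof (labZ_range c q). lia. Qed.

Lemma lab_Z c q : Z.of_nat (lab c q) = labZ c q.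
Proof. unfold lab. pose proof (labZ_range c q). lia. Qed.

Definition Fq (c : nat) (s t : R) (i : nat) (q : pt) : R :=
  if Nat.eqb (lab c q) i then hat (s - IZR (fst q)) (t - IZR (snd q)) else 0.

Definition Pm (c : nat) (s t : R) : nat -> R := fun i => lsum (corners s t) (Fq c s t i).

Lemma Fq_nonneg c s t i q : 0 <= Fq c s t i q.
Proof. unfold Fq. destruct (Nat.eqb _ _). apply hat_nonneg. lra. Qed.

Lemma Pm_nonneg c s t i : 0 <= Pm c s t i.
Proof. apply lsum_nonneg. apply Fq_nonneg. Qed.

Lemma Pm_out c s t i : (N <= i)%nat -> Pm c s t i = 0.
Proof. intros. apply lsum_zero. intros q _. unfold Fq. pose proof (lab_lt c q).
  destruct (Nat.eqb_spec (lab c q) i); [lia|auto]. Qed.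

Lemma Pm_sum_list c s t L : NoDup L ->
  (forall q, hat (s - IZR (fst q)) (t - IZR (snd q)) <> 0 -> In q L) ->
  forall i, Pm c s t i = lsum L (Fq c s t i).
Proof. intros ND H i. unfold Pm. apply SUMLEM; auto using corners_nodup.
  intros q Hq. unfold Fq in Hq. destruct (Nat.eqb _ _); [|lra]. split; [apply hat_corner|apply H]; auto. Qed.

Definition TS (l0 l1 l2 : nat) (x0 x1 x2 : R) (i : nat) : R :=
  (if Nat.eqb l0 i then x0 else 0) + (if Nat.eqb l1 i then x1 else 0) + (if Nat.eqb l2 i then x2 else 0).

Lemma Pm_up c a b u w : 0 <= w -> w <= u -> u <= 1 -> forall i,
  Pm c (IZR a + u) (IZR b + w) i =
  TS (lab c (a,b)) (lab c (a+1,b)%Z) (lab c (a+1,b+1)%Z) (1-u) (u-w) w i.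
Proof. intros H1 H2 H3 i. rewrite (Pm_sum_list c _ _ [(a,b); (a+1,b)%Z; (a+1,b+1)%Z]).
  - unfold lsum, TS, Fq; simpl. rewrite !hat_up' by auto. unfold upv.
    replace (a - a)%Z with 0%Z by lia. replace (a + 1 - a)%Z with 1%Z by lia.
    replace (b - b)%Z with 0%Z by lia. replace (b + 1 - b)%Z with 1%Z by lia. simpl. lra.
  - repeat constructor; simpl; intros H; repeat (destruct H as [H|H]; [injection H; lia|]); auto.
  - intros [x y] Hq. simpl in Hq. rewrite hat_up' in Hq by auto. unfold upv in Hq.
    destruct (Z.eqb_spec (x - a) 0), (Z.eqb_spec (y - b) 0), (Z.eqb_spec (x-a) 1), (Z.eqb_spec (y - b) 1);
    simpl in Hq; try lra; simpl;
    first [left; f_equal; lia | right; left; f_equal; lia | right; right; left; f_equal; lia | lia].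
Qed.

Lemma Pm_dn c a b u w : 0 <= u -> u <= w -> w <= 1 -> forall i,
  Pm c (IZR a + u) (IZR b + w) i =
  TS (lab c (a,b)) (lab c (a,b+1)%Z) (lab c (a+1,b+1)%Z) (1-w) (w-u) u i.
Proof. intros H1 H2 H3 i. rewrite (Pm_sum_list c _ _ [(a,b); (a,b+1)%Z; (a+1,b+1)%Z]).
  - unfold lsum, TS, Fq; simpl. rewrite !hat_dn' by auto. unfold dnv.
    replace (a - a)%Z with 0%Z by lia. replace (a + 1 - a)%Z with 1%Z by lia.
    replace (b - b)%Z with 0%Z by lia. replace (b + 1 - b)%Z with 1%Z by lia. simpl. lra.
  - repeat constructor; simpl; intros H; repeat (destruct H as [H|H]; [injection H; lia|]); auto.
  - intros [x y] Hq. simpl in Hq. rewrite hat_dn' in Hq by auto. unfold dnv in Hq.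
    destruct (Z.eqb_spec (x - a) 0), (Z.eqb_spec (y - b) 0), (Z.eqb_spec (x-a) 1), (Z.eqb_spec (y - b) 1);
    simpl in Hq; try lra; simpl;
    first [left; f_equal; lia | right; left; f_equal; lia | right; right; left; f_equal; lia | lia].
Qed.

Lemma pt_form s t : exists a b u w, s = IZR a + u /\ t = IZR b + w /\ 0 <= u < 1 /\ 0 <= w < 1.
Proof. exists (fl s), (fl t), (s - IZR (fl s)), (t - IZR (fl t)).
  pose proof (fl_spec s); pose proof (fl_spec t). repeat split; lra. Qed.

End Plane.

End SC.
Import SC.

Module SD.
Open Scope R_scope.
Import ListNotations.

Section Real.
Variables N n1 n2 n3 : nat.
Hypothesis HN : (0 < N)%nat.
Hypothesis H1 : (n1 < N)%nat.
Hypothesis H2 : (n2 < N)%nat.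

Lemma natmod_Z x y : Z.of_nat ((x + y) mod N) = ((Z.of_nat x + Z.of_nat y) mod Z.of_nat N)%Z.
Proof. rewrite Nat2Z.inj_mod, Nat2Z.inj_add. auto. Qed.

Lemma lab_eq_Z c q m : Z.of_nat m = labZ N n1 n2 c q -> lab N n1 n2 c q = m.
Proof. intros H. apply Nat2Z.inj. rewrite lab_Z by auto. auto. Qed.

Lemma lab_a1 c a b : lab N n1 n2 c ((a+1)%Z, b) = ((lab N n1 n2 c (a,b) + n1) mod N)%nat.
Proof. apply lab_eq_Z. rewrite natmod_Z, lab_Z by auto. unfold labZ; simpl.
  rewrite Z.add_mod_idemp_l by lia. f_equal. ring. Qed.

Lemma lab_b1 c a b : lab N n1 n2 c (a, (b+1)%Z) = ((lab N n1 n2 c (a,b) + n2) mod N)%nat.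
Proof. apply lab_eq_Z. rewrite natmod_Z, lab_Z by auto. unfold labZ; simpl.
  rewrite Z.add_mod_idemp_l by lia. f_equal. ring. Qed.

Lemma lab_ab1 c a b : lab N n1 n2 c ((a+1)%Z, (b+1)%Z) = ((lab N n1 n2 c (a,b) + n1 + n2) mod N)%nat.
Proof. apply lab_eq_Z. rewrite natmod_Z, Nat2Z.inj_add, lab_Z by auto. unfold labZ; simpl.
  rewrite <- Z.add_assoc. rewrite Z.add_mod_idemp_l by lia. f_equal. ring. Qed.

Lemma lab_dn1 c a b : lab N n1 n2 c (a, (b+1)%Z) = ((lab N n1 n2 c ((a+1)%Z,(b+1)%Z) + (N - n1)) mod N)%nat.
Proof. apply lab_eq_Z. rewrite natmod_Z, lab_Z by auto. rewrite Nat2Z.inj_sub by lia. unfold labZ; simpl.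
  rewrite Z.add_mod_idemp_l by lia.
  replace (Z.of_nat c + (a + 1) * Z.of_nat n1 + (b + 1) * Z.of_nat n2 + (Z.of_nat N - Z.of_nat n1))%Z
    with ((Z.of_nat c + a * Z.of_nat n1 + (b + 1) * Z.of_nat n2) + 1 * Z.of_nat N)%Z by ring.
  rewrite Z.mod_add by lia. auto. Qed.

Lemma modeq (A B k M : Z) : (M <> 0)%Z -> A = (B + k * M)%Z -> (A mod M = B mod M)%Z.
Proof. intros H E; subst; apply Z.mod_add; auto. Qed.

Lemma lab_dn2 c a b : lab N n1 n2 c (a, b) =
  ((lab N n1 n2 c ((a+1)%Z,(b+1)%Z) + (N - n1) + (N - n2)) mod N)%nat.
Proof. apply lab_eq_Z. rewrite natmod_Z, !Nat2Z.inj_add, !Nat2Z.inj_sub, lab_Z by lia. unfold labZ; simpl.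
  rewrite <- !Z.add_assoc, Z.add_mod_idemp_l by lia.
  apply (modeq _ _ 2); [lia| ring]. Qed.

Lemma rsum_TS l0 l1 l2 x0 x1 x2 : (l0 < N)%nat -> (l1 < N)%nat -> (l2 < N)%nat ->
  rsum N (TS l0 l1 l2 x0 x1 x2) = x0 + x1 + x2.
Proof. intros. unfold TS. rewrite !rsum_plus, !rsum_ind by auto. auto. Qed.

Lemma TS_supp l0 l1 l2 x0 x1 x2 i : TS l0 l1 l2 x0 x1 x2 i <> 0 -> i = l0 \/ i = l1 \/ i = l2.
Proof. unfold TS. destruct (Nat.eqb_spec l0 i), (Nat.eqb_spec l1 i), (Nat.eqb_spec l2 i); auto; lra. Qed.

Lemma Pm_real c s t : realization N n1 n2 n3 (Pm N n1 n2 c s t).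
Proof.
  destruct (pt_form s t) as [a [b [u [w [Es [Et [Hu Hw]]]]]]]. subst s t.
  pose proof (lab_lt N n1 n2 HN c) as LL.
  split; [|split; [|split]].
  - intros; apply Pm_out; auto.
  - intros; apply Pm_nonneg.
  - destruct (Rle_dec w u).
    + rewrite (rsum_ext _ _ _ (fun i _ => Pm_up N n1 n2 HN c a b u w ltac:(lra) ltac:(lra) ltac:(lra) i)).
      rewrite rsum_TS by auto. lra.
    + rewrite (rsum_ext _ _ _ (fun i _ => Pm_dn N n1 n2 HN c a b u w ltac:(lra) ltac:(lra) ltac:(lra) i)).
      rewrite rsum_TS by auto. lra.
  - destruct (Rle_dec w u).
    + exists (fun i => i = lab N n1 n2 c (a,b) \/ i = lab N n1 n2 c ((a+1)%Z,b) \/ i = lab N n1 n2 c ((a+1)%Z,(b+1)%Z)).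
      split.
      * left. exists (lab N n1 n2 c (a,b)). split; auto. left. intros i.
        rewrite lab_a1, lab_ab1. tauto.
      * intros i Hi. rewrite (Pm_up N n1 n2 HN) in Hi by lra. apply TS_supp in Hi. auto.
    + exists (fun i => i = lab N n1 n2 c (a,b) \/ i = lab N n1 n2 c (a,(b+1)%Z) \/ i = lab N n1 n2 c ((a+1)%Z,(b+1)%Z)).
      split.
      * left. exists (lab N n1 n2 c ((a+1)%Z,(b+1)%Z)). split; auto. right. intros i.
        rewrite lab_dn1, lab_dn2. tauto.
      * intros i Hi. rewrite (Pm_dn N n1 n2 HN) in Hi by lra. apply TS_supp in Hi. auto.
Qed.

End Real.

End SD.
Import SD.

Module SE.
Open Scope Z_scope.

Lemma Zdiv_nat (a b : nat) : (Z.of_nat a | Z.of_nat b) -> Nat.divide a b.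
Proof. intros [k Hk]. destruct (Nat.eq_dec a 0).
  - subst. simpl in Hk. exists 0%nat. lia.
  - assert (0 <= k) by nia. exists (Z.to_nat k). nia. Qed.

Lemma natdiv_Z (a b : nat) : Nat.divide a b -> (Z.of_nat a | Z.of_nat b).
Proof. intros [k Hk]. exists (Z.of_nat k). lia. Qed.

Section NT.
Variables N n1 n2 n3 : nat.
Hypothesis Hn1 : (1 <= n1)%nat.
Hypothesis H12 : (n1 < n2)%nat.
Hypothesis H23 : (n2 < n3)%nat.
Hypothesis Hsum : (n1 + n2 + n3 = N)%nat.

Lemma NT_exists : exists gz e p q u v M : Z,
  gz = Z.of_nat (Nat.gcd n1 (Nat.gcd n2 n3)) /\ 0 < gz /\
  (gz | Z.of_nat n1) /\ (gz | Z.of_nat n2) /\ Z.of_nat N = gz * M /\ 0 < M /\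
  Z.of_nat n1 = e * p /\ Z.of_nat n2 = e * q /\ u * p + v * q = 1 /\
  (exists x y w, x * Z.of_nat n1 + y * Z.of_nat n2 + w * Z.of_nat N = gz) /\
  (M * u * Z.of_nat n1 + M * v * Z.of_nat n2) mod Z.of_nat N = 0 /\
  (forall al be, (al * Z.of_nat n1 + be * Z.of_nat n2) mod Z.of_nat N = 0 ->
     exists i j, al = i * q + j * (M * u) /\ be = i * (- p) + j * (M * v)).
Proof.
  set (A := Z.of_nat n1). set (B := Z.of_nat n2). set (C := Z.of_nat n3). set (NN := Z.of_nat N).
  assert (ENN : NN = A + B + C) by (unfold NN, A, B, C; lia).
  set (e := Z.gcd A B).
  set (G := Z.gcd e NN).
  assert (Apos : 0 < A) by (unfold A; lia). assert (Bpos : 0 < B) by (unfold B; lia).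
  assert (epos : 0 < e).
  { assert (0 <= e) by apply Z.gcd_nonneg. destruct (Z.eq_dec e 0); [|lia].
    apply Z.gcd_eq_0 in e0. lia. }
  assert (Gpos : 0 < G).
  { assert (0 <= G) by apply Z.gcd_nonneg. destruct (Z.eq_dec G 0); [|lia].
    apply Z.gcd_eq_0 in e0. lia. }
  assert (eA : (e | A)) by apply Z.gcd_divide_l. assert (eB : (e | B)) by apply Z.gcd_divide_r.
  assert (Ge : (G | e)) by apply Z.gcd_divide_l. assert (GN : (G | NN)) by apply Z.gcd_divide_r.
  assert (GA : (G | A)) by exact (Z.divide_trans G e A Ge eA).
  assert (GB : (G | B)) by exact (Z.divide_trans G e B Ge eB).
  assert (EG : G = Z.of_nat (Nat.gcd n1 (Nat.gcd n2 n3))).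
  { apply Z.divide_antisym_nonneg; try lia.
    - assert (GC : (G | C)).
      { replace C with (NN - A - B) by lia. apply Z.divide_sub_r; [apply Z.divide_sub_r|]; auto. }
      replace G with (Z.of_nat (Z.to_nat G)) by lia. apply natdiv_Z.
      apply Nat.gcd_greatest; [|apply Nat.gcd_greatest]; apply Zdiv_nat; rewrite Z2Nat.id by lia; auto.
    - set (g := Nat.gcd n1 (Nat.gcd n2 n3)).
      assert (g1 : Nat.divide g n1) by apply Nat.gcd_divide_l.
      assert (g23 : Nat.divide g (Nat.gcd n2 n3)) by apply Nat.gcd_divide_r.
      assert (g2 : Nat.divide g n2) by (exact (Nat.divide_trans _ _ _ g23 (Nat.gcd_divide_l n2 n3))).
      assert (g3 : Nat.divide g n3) by (exact (Nat.divide_trans _ _ _ g23 (Nat.gcd_divide_r n2 n3))).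
      apply natdiv_Z in g1, g2, g3. fold A in g1. fold B in g2. fold C in g3.
      apply Z.gcd_greatest; [apply Z.gcd_greatest|]; auto.
      rewrite ENN. repeat apply Z.divide_add_r; auto. }
  destruct eA as [p Hp]. destruct eB as [q Hq].
  destruct GN as [M HM]. destruct Ge as [e' He'].
  assert (Mpos : 0 < M) by nia.
  assert (pq1 : Z.gcd p q = 1).
  { assert (p = A / e) by (rewrite Hp, Z.div_mul; lia). assert (q = B / e) by (rewrite Hq, Z.div_mul; lia).
    subst p q. apply Z.gcd_div_gcd; auto; lia. }
  assert (eM1 : Z.gcd e' M = 1).
  { assert (e' = e / G) by (rewrite He', Z.div_mul; lia). assert (M = NN / G) by (rewrite HM, Z.div_mul; lia).
    subst e' M. apply Z.gcd_div_gcd; auto; lia. }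
  destruct (Zis_gcd_bezout p q 1) as [u v Huv].
  { rewrite <- pq1. apply Zgcd_is_gcd. }
  exists G, e, p, q, u, v, M.
  split; [auto|]. split; [auto|]. split; [auto|]. split; [auto|]. split; [lia|]. split; [auto|].
  split; [lia|]. split; [lia|]. split; [auto|].
  split.
  { destruct (Zis_gcd_bezout A B e (Zgcd_is_gcd A B)) as [u1 v1 H1].
    destruct (Zis_gcd_bezout e NN G (Zgcd_is_gcd e NN)) as [u2 v2 H2].
    exists (u2 * u1), (u2 * v1), v2. rewrite <- H2, <- H1. ring. }
  split.
  { replace (M * u * A + M * v * B) with (e' * (u * p + v * q) * NN) by (rewrite HM, Hp, Hq, He'; ring).
    apply Z.mod_mul. lia. }
  intros al be Hab.
  apply Z.mod_divide in Hab; [|lia]. destruct Hab as [k Hk].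
  set (r := al * p + be * q).
  assert (Er : e * r = k * NN) by (unfold r; rewrite <- Hk, Hp, Hq; ring).
  assert (E2 : e' * r = k * M) by (rewrite He', HM in Er; nia).
  assert (Mr : (M | r)).
  { apply Z.gauss with e'. exists k. lia. rewrite Z.gcd_comm; auto. }
  destruct Mr as [m Hm].
  assert (E3 : (al - m * M * u) * p = - ((be - m * M * v) * q)).
  { assert (Hr : al * p + be * q = m * M) by (rewrite <- Hm; auto).
    assert (Hx: (al - m*M*u)*p + (be - m*M*v)*q = (al*p+be*q) - m*M*(u*p+v*q)) by ring.
    rewrite Huv, Hr in Hx. lia. }
  assert (qd : (q | (al - m * M * u))).
  { apply Z.gauss with p. exists (- (be - m * M * v)). lia. rewrite Z.gcd_comm; auto. }
  destruct qd as [i Hi].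
  assert (qnz : q <> 0) by nia.
  exists i, m. split. lia.
  assert ((be - m * M * v) * q = (- i * p) * q) by nia.
  apply Z.mul_reg_r in H; auto. lia.
Qed.

End NT.

End SE.
Import SE.

Module SG.
Open Scope R_scope.

Definition ang (a b : R) : R := if Rle_dec 0 b then acos a else - acos a.

Lemma ang_cos a b : a * a + b * b = 1 -> cos (ang a b) = a.
Proof. intros H. assert (-1 <= a <= 1) by nra. unfold ang.
  destruct (Rle_dec 0 b); [|rewrite cos_neg]; apply cos_acos; auto. Qed.

Lemma ang_sin a b : a * a + b * b = 1 -> sin (ang a b) = b.
Proof. intros H. assert (-1 <= a <= 1) by nra.
  assert (E : sqrt (1 - a²) = Rabs b).
  { rewrite <- sqrt_Rsqr_abs. f_equal. unfold Rsqr. lra. }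
  unfold ang. destruct (Rle_dec 0 b).
  - rewrite sin_acos by auto. rewrite E. apply Rabs_right. lra.
  - rewrite sin_neg, sin_acos by auto. rewrite E. rewrite Rabs_left by lra. ring. Qed.

Lemma cos_Zper x m : cos (x + 2 * PI * IZR m) = cos x.
Proof. destruct (Z_le_gt_dec 0 m).
  - rewrite <- (Z2Nat.id m) by auto. rewrite <- INR_IZR_INZ.
    replace (x + 2 * PI * INR (Z.to_nat m)) with (x + 2 * INR (Z.to_nat m) * PI) by ring. apply cos_period.
  - replace m with (- Z.of_nat (Z.to_nat (- m)))%Z by lia. rewrite opp_IZR, <- INR_IZR_INZ.
    set (k := Z.to_nat (-m)). rewrite <- (cos_period (x + 2 * PI * - INR k) k). f_equal. ring. Qed.

Lemma sin_Zper x m : sin (x + 2 * PI * IZR m) = sin x.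
Proof. destruct (Z_le_gt_dec 0 m).
  - rewrite <- (Z2Nat.id m) by auto. rewrite <- INR_IZR_INZ.
    replace (x + 2 * PI * INR (Z.to_nat m)) with (x + 2 * INR (Z.to_nat m) * PI) by ring. apply sin_period.
  - replace m with (- Z.of_nat (Z.to_nat (- m)))%Z by lia. rewrite opp_IZR, <- INR_IZR_INZ.
    set (k := Z.to_nat (-m)). rewrite <- (sin_period (x + 2 * PI * - INR k) k). f_equal. ring. Qed.

Lemma reduce_angle g : exists m : Z, - PI <= g - 2 * PI * IZR m <= PI.
Proof. pose proof PI_RGT_0. set (y := (g + PI) / (2 * PI)). exists (fl y).
  pose proof (fl_spec y) as [A B].
  assert (g = y * (2 * PI) - PI) by (unfold y; field; lra).
  assert (IZR (fl y) * (2 * PI) <= y * (2 * PI)) by (apply Rmult_le_compat_r; lra).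
  assert (y * (2 * PI) < (IZR (fl y) + 1) * (2 * PI)) by (apply Rmult_lt_compat_r; lra).
  split; nra. Qed.

Lemma sin_lb3 x : 0 <= x -> x <= 2 -> x / 3 <= sin x.
Proof. intros. destruct (pre_sin_bound x 0 ltac:(lra) ltac:(lra)) as [H1 _].
  simpl in H1. unfold sin_approx, sin_term in H1. simpl in H1. nra. Qed.

Lemma ANG al be : exists m : Z,
  (al - be - 2 * PI * IZR m) * (al - be - 2 * PI * IZR m) <=
  9 * ((cos al - cos be) * (cos al - cos be) + (sin al - sin be) * (sin al - sin be)).
Proof. destruct (reduce_angle (al - be)) as [m Hm]. exists m.
  set (g := al - be - 2 * PI * IZR m).
  assert (Ec : cos g = cos (al - be)).
  { unfold g. replace (al - be - 2 * PI * IZR m) with (al - be + 2 * PI * IZR (- m)) by (rewrite opp_IZR; ring).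
    apply cos_Zper. }
  assert (Hg : -PI <= g <= PI) by (unfold g; lra). clearbody g.
  rewrite cos_minus in Ec.
  pose proof (sin2_cos2 al). pose proof (sin2_cos2 be). unfold Rsqr in *.
  assert (E2 : cos g = 1 - 2 * sin (g/2) * sin (g/2)) by (rewrite <- cos_2a_sin; f_equal; field).
  pose proof PI2_1. pose proof PI_4.
  assert (Hs : Rabs g / 6 <= Rabs (sin (g / 2))).
  { destruct (Rle_dec 0 g).
    - rewrite Rabs_right by lra. rewrite Rabs_right.
      + pose proof (sin_lb3 (g/2) ltac:(lra) ltac:(lra)). lra.
      + pose proof (sin_lb3 (g/2) ltac:(lra) ltac:(lra)). lra.
    - rewrite Rabs_left by lra. rewrite Rabs_left.
      + pose proof (sin_lb3 (-(g/2)) ltac:(lra) ltac:(lra)). rewrite sin_neg in H3. lra.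
      + pose proof (sin_lb3 (-(g/2)) ltac:(lra) ltac:(lra)). rewrite sin_neg in H3.
        destruct (Req_dec g 0); [lra|]. assert (0 < -(g/2)) by lra.
        pose proof (sin_lb3 (-(g/2)) ltac:(lra) ltac:(lra)). lra. }
  assert (g * g = Rabs g * Rabs g) by (rewrite <- Rabs_mult; rewrite Rabs_right; nra).
  assert (sin (g/2) * sin (g/2) = Rabs (sin (g/2)) * Rabs (sin (g/2))) by (rewrite <- Rabs_mult; rewrite Rabs_right; nra).
  assert (Rabs g / 6 * (Rabs g / 6) <= Rabs (sin (g/2)) * Rabs (sin (g/2))).
  { pose proof (Rabs_pos g). apply Rmult_le_compat; lra. }
  nra. Qed.

Lemma sin_abs_le x : Rabs (sin x) <= Rabs x.
Proof. destruct (Rtotal_order x 0) as [H|[H|H]].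
  - pose proof (sin_lt_x (-x) ltac:(lra)). rewrite sin_neg in H0.
    pose proof (SIN_bound x). rewrite (Rabs_left x) by lra.
    destruct (Rle_dec 0 (sin x)). rewrite Rabs_right by lra.
    destruct (Rle_dec (-x) PI).
    + destruct (Req_dec x (-PI)). subst. rewrite sin_neg, sin_PI. pose proof PI_RGT_0. lra.
      pose proof (sin_lt_0_var x ltac:(lra) H). lra.
    + pose proof PI_RGT_0. pose proof PI2_1. lra.
    + rewrite Rabs_left by lra. lra.
  - subst. rewrite sin_0, Rabs_R0. lra.
  - pose proof (sin_lt_x x H). rewrite (Rabs_right x) by lra.
    destruct (Rle_dec 0 (sin x)). rewrite Rabs_right by lra. lra.
    rewrite Rabs_left by lra.
    destruct (Rle_dec x PI).
    + assert (0 <= sin x) by (apply sin_ge_0; lra). lra.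
    + pose proof PI_RGT_0. pose proof PI2_1. pose proof (SIN_bound x). lra.
Qed.

Lemma half_abs y : Rabs (y / 2) = Rabs y / 2.
Proof. unfold Rdiv. rewrite Rabs_mult, (Rabs_right (/2)) by lra. auto. Qed.

Lemma cos_lip a b : Rabs (cos a - cos b) <= Rabs (a - b).
Proof. rewrite form2. rewrite !Rabs_mult. pose proof (sin_abs_le ((a-b)/2)) as H.
  rewrite half_abs in H.
  pose proof (SIN_bound ((a+b)/2)). assert (Rabs (sin ((a+b)/2)) <= 1) by (apply Rabs_le; lra).
  rewrite (Rabs_left (-2)) by lra.
  pose proof (Rabs_pos (sin ((a - b) / 2))). pose proof (Rabs_pos (sin ((a + b) / 2))).
  nra. Qed.

Lemma sin_lip a b : Rabs (sin a - sin b) <= Rabs (a - b).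
Proof. rewrite form4. rewrite !Rabs_mult. pose proof (sin_abs_le ((a-b)/2)) as H.
  rewrite half_abs in H.
  pose proof (COS_bound ((a+b)/2)). assert (Rabs (cos ((a+b)/2)) <= 1) by (apply Rabs_le; lra).
  rewrite (Rabs_right 2) by lra.
  pose proof (Rabs_pos (sin ((a - b) / 2))). pose proof (Rabs_pos (cos ((a + b) / 2))).
  nra. Qed.

Lemma sq_abs z : z * z = Rabs z * Rabs z.
Proof. destruct (Rcase_abs z); [rewrite Rabs_left|rewrite Rabs_right]; auto; ring. Qed.

Lemma ANG_bound a b a' b' d : a * a + b * b = 1 -> a' * a' + b' * b' = 1 ->
  Rabs (a - a') + Rabs (b - b') < d ->
  exists m : Z, Rabs (ang a' b' / (2 * PI) - ang a b / (2 * PI) - IZR m) < d.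
Proof. intros H1 H2 H3. destruct (ANG (ang a' b') (ang a b)) as [m Hm]. exists m.
  rewrite !ang_cos, !ang_sin in Hm by auto.
  pose proof PI2_1. pose proof (Rabs_pos (a - a')). pose proof (Rabs_pos (b - b')).
  set (z := ang a' b' - ang a b - 2 * PI * IZR m) in *.
  assert (E : ang a' b' / (2 * PI) - ang a b / (2 * PI) - IZR m = z / (2 * PI)) by (unfold z; field; lra).
  rewrite E. unfold Rdiv. rewrite Rabs_mult, (Rabs_right (/ (2 * PI))) by (apply Rle_ge; left; apply Rinv_0_lt_compat; lra).
  assert (Q : (a' - a) * (a' - a) + (b' - b) * (b' - b) <= (Rabs (a - a') + Rabs (b - b')) * (Rabs (a - a') + Rabs (b - b'))).
  { assert ((a' - a) * (a' - a) = Rabs (a - a') * Rabs (a - a')) by (rewrite <- sq_abs; ring).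
    assert ((b' - b) * (b' - b) = Rabs (b - b') * Rabs (b - b')) by (rewrite <- sq_abs; ring).
    nra. }
  assert (Hz : Rabs z < 3 * d).
  { assert (z * z < 9 * (d * d)) by nra.
    assert (z * z = Rabs z * Rabs z) by apply sq_abs.
    pose proof (Rabs_pos z). nra. }
  assert (0 < / (2 * PI)) by (apply Rinv_0_lt_compat; lra).
  assert (Hinv : / (2 * PI) * (2 * PI) = 1) by (field; lra).
  assert (/ (2 * PI) < 1 / 3) by nra.
  pose proof (Rabs_pos z). nra. Qed.

End SG.
Import SG.

Module SH.
Open Scope R_scope.
Import ListNotations.

Lemma NoDup_prod {A B : Type} (l : list A) (l' : list B) : NoDup l -> NoDup l' -> NoDup (list_prod l l').
Proof. intros H1 H2. induction H1; simpl. constructor.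
  apply NoDup_app; auto.
  - apply NoDup_map_NoDup_ForallPairs; auto. intros a b _ _ E. injection E; auto.
  - intros [a b] Ha Hb. apply in_map_iff in Ha. destruct Ha as [y [E _]]. injection E; intros; subst.
    apply in_prod_iff in Hb. tauto. Qed.

Definition win (a b : Z) : list pt := list_prod [(a-1)%Z; a; (a+1)%Z; (a+2)%Z] [(b-1)%Z; b; (b+1)%Z; (b+2)%Z].

Lemma win_nodup a b : NoDup (win a b).
Proof. apply NoDup_prod; repeat constructor; simpl; intros H; repeat (destruct H as [H|H]; [lia|]); auto. Qed.

Lemma in_win a b x y : (a - 1 <= x <= a + 2)%Z -> (b - 1 <= y <= b + 2)%Z -> In (x,y) (win a b).
Proof. intros. unfold win. apply in_prod_iff. split; simpl;
  [assert (x = a - 1 \/ x = a \/ x = a + 1 \/ x = a + 2)%Z by lia | assert (y = b - 1 \/ y = b \/ y = b + 1 \/ y = b + 2)%Z by lia];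
  intuition. Qed.

Lemma win_len a b F c : (forall q, F q <= c) -> lsum (win a b) F <= 16 * c.
Proof. intros H. unfold win. simpl. unfold lsum; simpl. pose proof (H (a-1, b-1)%Z).
  repeat match goal with |- context [F ?q] => lazymatch goal with _ : F q <= c |- _ => fail | _ => pose proof (H q) end end.
  lra. Qed.

Lemma near_int (x : Z) (s s' : R) : Rabs (s - s') < 1 -> -1 < s' - IZR x < 1 ->
  (fl s - 1 <= x <= fl s + 2)%Z.
Proof. intros H1 H2. pose proof (fl_spec s). apply Rabs_def2 in H1.
  assert (IZR (fl s - 2) < IZR x) by (rewrite minus_IZR; simpl; lra).
  assert (IZR x < IZR (fl s + 3)) by (rewrite plus_IZR; simpl; lra).
  apply lt_IZR in H0. apply lt_IZR in H3. lia. Qed.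

Lemma lsum_minus L F G : lsum L (fun q => F q - G q) = lsum L F - lsum L G.
Proof. induction L; simpl; lra. Qed.

Section Lip.
Variables N n1 n2 : nat.
Hypothesis HN : (0 < N)%nat.

Lemma Pm_win c s t s' t' i : Rabs (s - s') < 1 -> Rabs (t - t') < 1 ->
  Pm N n1 n2 c s' t' i = lsum (win (fl s) (fl t)) (Fq N n1 n2 c s' t' i).
Proof. intros. apply Pm_sum_list. apply win_nodup.
  intros [x y] Hq. simpl in Hq.
  assert (0 < hat (s' - IZR x) (t' - IZR y)) by (pose proof (hat_nonneg (s' - IZR x) (t' - IZR y)); lra).
  apply hat_pos_bounds in H1. apply in_win; [apply (near_int x s s')|apply (near_int y t t')]; auto; lra. Qed.

Lemma LIP c s t s' t' : Rabs (s - s') < 1 -> Rabs (t - t') < 1 ->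
  distN N (Pm N n1 n2 c s t) (Pm N n1 n2 c s' t') <= 32 * (Rabs (s - s') + Rabs (t - t')).
Proof. intros H1 H2. unfold distN.
  assert (R0 : Rabs (s - s) < 1) by (rewrite Rminus_diag, Rabs_R0; lra).
  assert (R1 : Rabs (t - t) < 1) by (rewrite Rminus_diag, Rabs_R0; lra).
  set (W := win (fl s) (fl t)).
  eapply Rle_trans.
  { apply rsum_le. intros i _. rewrite (Pm_win c s t s t i) by auto. rewrite (Pm_win c s t s' t' i) by auto.
    fold W. replace (lsum W (Fq N n1 n2 c s t i) - lsum W (Fq N n1 n2 c s' t' i)) with
      (lsum W (fun q => Fq N n1 n2 c s t i q - Fq N n1 n2 c s' t' i q)).
    apply lsum_abs. apply lsum_minus. }
  rewrite rsum_lsum.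
  eapply Rle_trans.
  { apply lsum_le. intros q _.
    rewrite (rsum_ext N _ (fun i => if Nat.eqb (lab N n1 n2 c q) i then
        Rabs (hat (s - IZR (fst q)) (t - IZR (snd q)) - hat (s' - IZR (fst q)) (t' - IZR (snd q))) else 0)).
    rewrite rsum_ind by (apply lab_lt; auto). apply Rle_refl.
    intros i _. unfold Fq. destruct (Nat.eqb _ _); auto. rewrite Rminus_0_r, Rabs_R0; auto. }
  replace (32 * (Rabs (s - s') + Rabs (t - t'))) with (16 * (2 * (Rabs (s - s') + Rabs (t - t')))) by ring.
  apply win_len. intros q. eapply Rle_trans. apply hat_lip.
  replace (s - IZR (fst q) - (s' - IZR (fst q))) with (s - s') by ring.
  replace (t - IZR (snd q) - (t' - IZR (snd q))) with (t - t') by ring. lra.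
Qed.
End Lip.

End SH.
Import SH.

Module SF.
Open Scope R_scope.
Import ListNotations.

Lemma box_lemma (A B C e1 e2 k : Z) : (1 <= A)%Z -> (A < B)%Z -> (B < C)%Z -> (2 * C <> A + B + C)%Z ->
  (Z.abs e1 <= 2)%Z -> (Z.abs e2 <= 2)%Z -> (Z.abs (e1 - e2) <= 2)%Z ->
  (e1 * A + e2 * B = k * (A + B + C))%Z -> e1 = 0%Z /\ e2 = 0%Z.
Proof. intros. assert (Hk : (k = -1 \/ k = 0 \/ k = 1)%Z) by nia.
  assert (He1 : (e1 = -2 \/ e1 = -1 \/ e1 = 0 \/ e1 = 1 \/ e1 = 2)%Z) by lia.
  assert (He2 : (e2 = -2 \/ e2 = -1 \/ e2 = 0 \/ e2 = 1 \/ e2 = 2)%Z) by lia.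
  destruct Hk as [?|[?|?]]; destruct He1 as [?|[?|[?|[?|?]]]]; destruct He2 as [?|[?|[?|[?|?]]]]; subst; lia.
Qed.

Lemma abs_le2 z a : Rabs z <= a -> -a <= z <= a.
Proof. intros H. destruct (Rcase_abs z); [rewrite Rabs_left in H|rewrite Rabs_right in H]; auto; lra. Qed.

Section Main.
Variables N n1 n2 n3 : nat.
Hypothesis Hn1 : (1 <= n1)%nat.
Hypothesis H12 : (n1 < n2)%nat.
Hypothesis H23 : (n2 < n3)%nat.
Hypothesis Hsum : (n1 + n2 + n3 = N)%nat.
Hypothesis Hhalf : (2 * n3 <> N)%nat.

Lemma HN : (0 < N)%nat. Proof. lia. Qed.

Notation labZ := (labZ N n1 n2).
Notation lab := (lab N n1 n2).
Notation Pm := (Pm N n1 n2).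

Lemma lab_shiftZ c x y d1 d2 : labZ c ((x + d1)%Z, (y + d2)%Z) =
  ((labZ c (x,y) + d1 * Z.of_nat n1 + d2 * Z.of_nat n2) mod Z.of_nat N)%Z.
Proof. rewrite <- (Z.add_assoc (SC.labZ N n1 n2 c (x,y))). unfold SC.labZ at 2.
  rewrite Z.add_mod_idemp_l by lia. unfold SC.labZ; simpl. f_equal. ring. Qed.

Lemma labZ_diff c q q' : labZ c q = labZ c q' ->
  (((fst q - fst q') * Z.of_nat n1 + (snd q - snd q') * Z.of_nat n2) mod Z.of_nat N = 0)%Z.
Proof. unfold SC.labZ. intros H.
  replace ((fst q - fst q') * Z.of_nat n1 + (snd q - snd q') * Z.of_nat n2)%Z with
    ((Z.of_nat c + fst q * Z.of_nat n1 + snd q * Z.of_nat n2) - (Z.of_nat c + fst q' * Z.of_nat n1 + snd q' * Z.of_nat n2))%Z by ring.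
  rewrite Zminus_mod, H, Z.sub_diag. apply Z.mod_0_l. lia. Qed.

Lemma box_mod e1 e2 : (Z.abs e1 <= 2)%Z -> (Z.abs e2 <= 2)%Z -> (Z.abs (e1 - e2) <= 2)%Z ->
  ((e1 * Z.of_nat n1 + e2 * Z.of_nat n2) mod Z.of_nat N = 0)%Z -> e1 = 0%Z /\ e2 = 0%Z.
Proof. intros. apply Z.mod_divide in H2; [|lia]. destruct H2 as [k Hk].
  apply (box_lemma (Z.of_nat n1) (Z.of_nat n2) (Z.of_nat n3) e1 e2 k); try lia. Qed.

Lemma lab_inj_box c q q' : lab c q = lab c q' ->
  (Z.abs (fst q - fst q') <= 2)%Z -> (Z.abs (snd q - snd q') <= 2)%Z ->
  (Z.abs ((fst q - snd q) - (fst q' - snd q')) <= 2)%Z -> q = q'.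
Proof. intros H ? ? ?. assert (labZ c q = labZ c q').
  { rewrite <- !(lab_Z N n1 n2 HN). rewrite H. auto. }
  apply labZ_diff in H3. apply box_mod in H3; try lia.
  destruct q, q'; simpl in *. f_equal; lia. Qed.

Lemma int_close (a b : Z) (x : R) : -1 < x - IZR a < 1 -> -1 < x - IZR b < 1 -> (Z.abs (a - b) <= 1)%Z.
Proof. intros. assert (-2 < IZR (a - b) < 2) by (rewrite minus_IZR; lra).
  destruct H1. apply lt_IZR in H1. apply lt_IZR in H2. lia. Qed.

Lemma star_mem s t x y x' y' : 0 < hat (s - IZR x) (t - IZR y) -> 0 < hat (s - IZR x') (t - IZR y') ->
  (Z.abs (x - x') <= 1)%Z /\ (Z.abs (y - y') <= 1)%Z /\ (Z.abs ((x - y) - (x' - y')) <= 1)%Z.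
Proof. intros H H'. apply hat_pos_bounds in H, H'.
  split; [|split]; [apply (int_close _ _ s)|apply (int_close _ _ t)|apply (int_close _ _ (s - t))]; try lra;
  rewrite minus_IZR; lra. Qed.

Lemma star_eval c s t x y d1 d2 : 0 < hat (s - IZR x) (t - IZR y) ->
  (Z.abs d1 <= 1)%Z -> (Z.abs d2 <= 1)%Z -> (Z.abs (d1 - d2) <= 1)%Z ->
  Pm c s t (lab c ((x + d1)%Z, (y + d2)%Z)) = hat (s - IZR (x + d1)) (t - IZR (y + d2)).
Proof. intros Hp ? ? ?. unfold SC.Pm.
  transitivity (lsum [((x + d1)%Z, (y + d2)%Z)] (Fq N n1 n2 c s t (lab c ((x + d1)%Z, (y + d2)%Z)))).
  - apply SUMLEM. apply corners_nodup. repeat constructor; auto.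
    intros q Hq. unfold Fq in Hq. destruct (Nat.eqb_spec (lab c q) (lab c ((x + d1)%Z, (y + d2)%Z))) as [E|E]; [|lra].
    split. apply hat_corner; auto. left. symmetry.
    assert (0 < hat (s - IZR (fst q)) (t - IZR (snd q))) by (pose proof (hat_nonneg (s - IZR (fst q)) (t - IZR (snd q))); lra).
    destruct (star_mem s t _ _ _ _ Hp H2) as [? [? ?]].
    apply (lab_inj_box c) in E; auto; simpl; lia.
  - unfold lsum, Fq; simpl. rewrite Nat.eqb_refl. lra.
Qed.

Lemma star_coord c s t x y : 0 < hat (s - IZR x) (t - IZR y) ->
  let X := Pm c s t in
  s - IZR x = X (lab c ((x+1)%Z, (y+0)%Z)) - X (lab c ((x + -1)%Z, (y+0)%Z))
            + X (lab c ((x+1)%Z, (y+1)%Z)) - X (lab c ((x + -1)%Z, (y + -1)%Z)) /\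
  t - IZR y = X (lab c ((x+0)%Z, (y+1)%Z)) - X (lab c ((x+0)%Z, (y + -1)%Z))
            + X (lab c ((x+1)%Z, (y+1)%Z)) - X (lab c ((x + -1)%Z, (y + -1)%Z)).
Proof. intros Hp X. unfold X. rewrite !star_eval by (auto; simpl; lia).
  destruct (star_id _ _ Hp) as [E1 E2].
  rewrite !plus_IZR.
  replace (s - (IZR x + 1)) with (s - IZR x - 1) by ring.
  replace (s - (IZR x + -1)) with (s - IZR x + 1) by ring.
  replace (t - (IZR y + 1)) with (t - IZR y - 1) by ring.
  replace (t - (IZR y + -1)) with (t - IZR y + 1) by ring.
  replace (s - (IZR x + 0)) with (s - IZR x) by ring.
  replace (t - (IZR y + 0)) with (t - IZR y) by ring.
  split; lra. Qed.


Lemma rsum_pos_ex n f : 0 < rsum n f -> exists i, (i < n)%nat /\ 0 < f i.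
Proof. induction n; simpl; intros H; [lra|].
  destruct (Rlt_dec 0 (f n)). exists n; split; auto; lia.
  destruct IHn as [i [? ?]]. lra. exists i; split; auto; lia. Qed.

Lemma pos_label c s t i : 0 < Pm c s t i -> exists x y, lab c (x,y) = i /\ 0 < hat (s - IZR x) (t - IZR y).
Proof. intros H. unfold SC.Pm in H. apply lsum_pos_ex in H; [|apply Fq_nonneg].
  destruct H as [[x y] [_ Hq]]. unfold Fq in Hq. destruct (Nat.eqb_spec (lab c (x,y)) i); [|lra].
  exists x, y; auto. Qed.

Lemma exists_pos (c : nat) s t : exists x y, 0 < hat (s - IZR x) (t - IZR y).
Proof. destruct (Pm_real N n1 n2 n3 HN ltac:(lia) ltac:(lia) c s t) as [_ [_ [Hs _]]].
  destruct (rsum_pos_ex N (Pm c s t)) as [i [_ Hi]]. lra.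
  destruct (pos_label c s t i Hi) as [x [y [_ H]]]. eauto. Qed.

Lemma fl_unique (a : Z) y : IZR a <= y < IZR a + 1 -> fl y = a.
Proof. intros H. pose proof (fl_spec y).
  assert (-1 < IZR (fl y - a) < 1) by (rewrite minus_IZR; lra).
  destruct H1 as [H1 H2]. apply lt_IZR in H1. apply lt_IZR in H2. lia. Qed.

Lemma fl_shift x l : fl (x + IZR l) = (fl x + l)%Z.
Proof. apply fl_unique. pose proof (fl_spec x). rewrite plus_IZR. lra. Qed.

Lemma labZ_period c x y l1 l2 : ((l1 * Z.of_nat n1 + l2 * Z.of_nat n2) mod Z.of_nat N = 0)%Z ->
  labZ c ((x + l1)%Z, (y + l2)%Z) = labZ c (x,y).
Proof. intros H. rewrite lab_shiftZ. rewrite <- Z.add_assoc.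
  rewrite Zplus_mod, H, Z.add_0_r, Z.mod_mod by lia. apply Z.mod_small. apply labZ_range. apply HN. Qed.

Lemma lab_period c x y l1 l2 : ((l1 * Z.of_nat n1 + l2 * Z.of_nat n2) mod Z.of_nat N = 0)%Z ->
  lab c ((x + l1)%Z, (y + l2)%Z) = lab c (x,y).
Proof. intros H. unfold SC.lab. rewrite labZ_period; auto. Qed.

Lemma Fq_shift c s t i x y l1 l2 : ((l1 * Z.of_nat n1 + l2 * Z.of_nat n2) mod Z.of_nat N = 0)%Z ->
  Fq N n1 n2 c (s + IZR l1) (t + IZR l2) i ((x + l1)%Z, (y + l2)%Z) = Fq N n1 n2 c s t i (x,y).
Proof. intros H. unfold Fq; simpl. rewrite lab_period by auto. rewrite !plus_IZR.
  replace (s + IZR l1 - (IZR x + IZR l1)) with (s - IZR x) by ring.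
  replace (t + IZR l2 - (IZR y + IZR l2)) with (t - IZR y) by ring. auto. Qed.

Lemma Pm_shift c s t l1 l2 : ((l1 * Z.of_nat n1 + l2 * Z.of_nat n2) mod Z.of_nat N = 0)%Z ->
  forall i, Pm c (s + IZR l1) (t + IZR l2) i = Pm c s t i.
Proof. intros H i. unfold SC.Pm, corners. rewrite !fl_shift. unfold lsum; simpl.
  replace (fl s + l1 + 1)%Z with ((fl s + 1) + l1)%Z by ring.
  replace (fl t + l2 + 1)%Z with ((fl t + 1) + l2)%Z by ring.
  rewrite !Fq_shift by auto. auto. Qed.

Variables gz e p q u v M : Z.
Hypothesis Egz : gz = Z.of_nat (Nat.gcd n1 (Nat.gcd n2 n3)).
Hypothesis gzpos : (0 < gz)%Z.
Hypothesis gzn1 : (gz | Z.of_nat n1)%Z.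
Hypothesis gzn2 : (gz | Z.of_nat n2)%Z.
Hypothesis EM : Z.of_nat N = (gz * M)%Z.
Hypothesis Mpos : (0 < M)%Z.
Hypothesis Ep : Z.of_nat n1 = (e * p)%Z.
Hypothesis Eq : Z.of_nat n2 = (e * q)%Z.
Hypothesis Euv : (u * p + v * q = 1)%Z.
Hypothesis Bez : exists x y w, (x * Z.of_nat n1 + y * Z.of_nat n2 + w * Z.of_nat N = gz)%Z.
Hypothesis Lb2 : ((M * u * Z.of_nat n1 + M * v * Z.of_nat n2) mod Z.of_nat N = 0)%Z.
Hypothesis Dec : forall al be, ((al * Z.of_nat n1 + be * Z.of_nat n2) mod Z.of_nat N = 0)%Z ->
     exists i j, al = (i * q + j * (M * u))%Z /\ be = (i * (- p) + j * (M * v))%Z.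

Definition g := Nat.gcd n1 (Nat.gcd n2 n3).

Lemma labZ_comp c x : (c < g)%nat -> (labZ c x mod gz = Z.of_nat c)%Z.
Proof. intros Hc. unfold SC.labZ. rewrite Z.mod_mod_divide by (exists M; lia).
  destruct gzn1 as [k1 Hk1]. destruct gzn2 as [k2 Hk2]. rewrite Hk1, Hk2.
  replace (Z.of_nat c + fst x * (k1 * gz) + snd x * (k2 * gz))%Z with (Z.of_nat c + (fst x * k1 + snd x * k2) * gz)%Z by ring.
  rewrite Z.mod_add by lia. apply Z.mod_small. unfold g in Hc. lia. Qed.

Lemma KEY c c' s t s' t' : (c < g)%nat -> (c' < g)%nat ->
  (forall i, Pm c s t i = Pm c' s' t' i) ->
  c = c' /\ exists l1 l2, ((l1 * Z.of_nat n1 + l2 * Z.of_nat n2) mod Z.of_nat N = 0)%Z /\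
     s' = s + IZR l1 /\ t' = t + IZR l2.
Proof. intros Hc Hc' HP.
  destruct (exists_pos c s t) as [x [y Hxy]].
  assert (Hi0 : 0 < Pm c' s' t' (lab c (x,y))).
  { rewrite <- HP. replace (x,y) with ((x+0)%Z,(y+0)%Z) by (f_equal; ring).
    rewrite star_eval by (auto; simpl; lia). rewrite !Z.add_0_r. auto. }
  destruct (pos_label c' s' t' _ Hi0) as [x' [y' [El Hxy']]].
  assert (EZ : labZ c' (x',y') = labZ c (x,y)).
  { rewrite <- !(lab_Z N n1 n2 HN). rewrite El. auto. }
  assert (Ecc : c = c').
  { pose proof (labZ_comp c (x,y) Hc). pose proof (labZ_comp c' (x',y') Hc'). rewrite EZ in H0. lia. }
  subst c'. split; auto.
  assert (Lsh : forall d1 d2, lab c ((x' + d1)%Z, (y' + d2)%Z) = lab c ((x + d1)%Z, (y + d2)%Z)).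
  { intros d1 d2. unfold SC.lab. rewrite !lab_shiftZ, EZ. auto. }
  destruct (star_coord c s t x y Hxy) as [S1 S2].
  destruct (star_coord c s' t' x' y' Hxy') as [S1' S2'].
  rewrite !Lsh in S1', S2'. rewrite <- !HP in S1', S2'.
  exists (x' - x)%Z, (y' - y)%Z. split.
  - apply labZ_diff in EZ. simpl in EZ. auto.
  - rewrite !minus_IZR. split; lra.
Qed.


Lemma up_ok x c a b : (forall i, 0 <= x i) -> rsum N x = 1 ->
  (forall i, x i <> 0 -> i = lab c (a,b) \/ i = lab c ((a+1)%Z,b) \/ i = lab c ((a+1)%Z,(b+1)%Z)) ->
  exists s t, forall i, Pm c s t i = x i.
Proof. intros Hn Hs Hsupp.
  set (l0 := lab c (a,b)). set (l1 := lab c ((a+1)%Z,b)). set (l2 := lab c ((a+1)%Z,(b+1)%Z)).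
  assert (d01 : l0 <> l1). { intros E. apply lab_inj_box in E; simpl; try lia. injection E; lia. }
  assert (d02 : l0 <> l2). { intros E. apply lab_inj_box in E; simpl; try lia. injection E; lia. }
  assert (d12 : l1 <> l2). { intros E. apply lab_inj_box in E; simpl; try lia. injection E; lia. }
  pose proof (lab_lt N n1 n2 HN c) as LL.
  rewrite (rsum_three N x l0 l1 l2) in Hs; auto.
  exists (IZR a + (x l1 + x l2)), (IZR b + x l2). intros i.
  rewrite Pm_up; try apply HN.
  - unfold TS. fold l0 l1 l2. replace (1 - (x l1 + x l2)) with (x l0) by lra. replace (x l1 + x l2 - x l2) with (x l1) by ring.
    destruct (Nat.eqb_spec l0 i), (Nat.eqb_spec l1 i), (Nat.eqb_spec l2 i); try subst i; try lia; try lra.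
    destruct (Req_EM_T (x i) 0) as [E|E]; [lra|]. destruct (Hsupp i E) as [?|[?|?]]; unfold l0, l1, l2 in *; congruence.
  - pose proof (Hn l2); lra.
  - pose proof (Hn l1); lra.
  - pose proof (Hn l0); lra.
  - apply LL.
  - apply LL.
  - apply LL.
Qed.

Lemma dn_ok x c a b : (forall i, 0 <= x i) -> rsum N x = 1 ->
  (forall i, x i <> 0 -> i = lab c (a,b) \/ i = lab c (a,(b+1)%Z) \/ i = lab c ((a+1)%Z,(b+1)%Z)) ->
  exists s t, forall i, Pm c s t i = x i.
Proof. intros Hn Hs Hsupp.
  set (l0 := lab c (a,b)). set (l1 := lab c (a,(b+1)%Z)). set (l2 := lab c ((a+1)%Z,(b+1)%Z)).
  assert (d01 : l0 <> l1). { intros E. apply lab_inj_box in E; simpl; try lia. injection E; lia. }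
  assert (d02 : l0 <> l2). { intros E. apply lab_inj_box in E; simpl; try lia. injection E; lia. }
  assert (d12 : l1 <> l2). { intros E. apply lab_inj_box in E; simpl; try lia. injection E; lia. }
  pose proof (lab_lt N n1 n2 HN c) as LL.
  rewrite (rsum_three N x l0 l1 l2) in Hs; auto.
  exists (IZR a + x l2), (IZR b + (x l1 + x l2)). intros i.
  rewrite Pm_dn; try apply HN.
  - unfold TS. fold l0 l1 l2. replace (1 - (x l1 + x l2)) with (x l0) by lra. replace (x l1 + x l2 - x l2) with (x l1) by ring.
    destruct (Nat.eqb_spec l0 i), (Nat.eqb_spec l1 i), (Nat.eqb_spec l2 i); try subst i; try lia; try lra.
    destruct (Req_EM_T (x i) 0) as [E|E]; [lra|]. destruct (Hsupp i E) as [?|[?|?]]; unfold l0, l1, l2 in *; congruence.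
  - pose proof (Hn l2); lra.
  - pose proof (Hn l1); lra.
  - pose proof (Hn l0); lra.
  - apply LL.
  - apply LL.
  - apply LL.
Qed.


Lemma reach k : (k < N)%nat -> exists c a b, (c < g)%nat /\ lab c (a,b) = k.
Proof. intros Hk. destruct Bez as [x [y [w Hb]]].
  set (kz := Z.of_nat k). set (m := (kz / gz)%Z). set (cz := (kz mod gz)%Z).
  assert (Ek : kz = (gz * m + cz)%Z) by (apply Z.div_mod; lia).
  assert (Hc : (0 <= cz < gz)%Z) by (apply Z.mod_pos_bound; lia).
  exists (Z.to_nat cz), (m * x)%Z, (m * y)%Z. split. unfold g; lia.
  apply Nat2Z.inj. rewrite (lab_Z N n1 n2 HN). unfold SC.labZ; simpl. fold kz.
  rewrite Z2Nat.id by lia.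
  rewrite (modeq _ kz (- m * w)%Z); [apply Z.mod_small; unfold kz; lia | lia |].
  rewrite Ek. rewrite <- Hb. ring.
Qed.

Lemma surj x : realization N n1 n2 n3 x -> exists c s t, (c < g)%nat /\ forall i, Pm c s t i = x i.
Proof. intros [Hout [Hn [Hs [vv [Hsimp Hsupp]]]]].
  destruct Hsimp as [[k [Hk [Hv|Hv]]] | [[k [Hk [m [Hm Hv]]]] | [k [Hk Hv]]]].
  - destruct (reach k Hk) as [c [a [b [Hc El]]]].
    destruct (up_ok x c a b Hn Hs) as [s' [t' E]]; [|exists c, s', t'; auto].
    intros i Hi. apply Hsupp, Hv in Hi. rewrite (lab_a1 N n1 n2), (lab_ab1 N n1 n2), El by lia. auto.
  - destruct (reach k Hk) as [c [a [b [Hc El]]]].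
    destruct (dn_ok x c (a-1)%Z (b-1)%Z Hn Hs) as [s' [t' E]]; [|exists c, s', t'; auto].
    intros i Hi. apply Hsupp, Hv in Hi.
    rewrite (lab_dn1 N n1 n2), (lab_dn2 N n1 n2) by lia.
    replace (a - 1 + 1)%Z with a by ring. replace (b - 1 + 1)%Z with b by ring. rewrite El. tauto.
  - destruct (reach k Hk) as [c [a [b [Hc El]]]].
    destruct Hm as [Hm|[Hm|Hm]]; subst m.
    + destruct (up_ok x c a b Hn Hs) as [s' [t' E]]; [|exists c, s', t'; auto].
      intros i Hi. apply Hsupp, Hv in Hi. rewrite (lab_a1 N n1 n2), El by lia. tauto.
    + destruct (dn_ok x c a b Hn Hs) as [s' [t' E]]; [|exists c, s', t'; auto].
      intros i Hi. apply Hsupp, Hv in Hi. rewrite (lab_b1 N n1 n2), El by lia. tauto.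
    + destruct (up_ok x c (a-1)%Z (b-1)%Z Hn Hs) as [s' [t' E]]; [|exists c, s', t'; auto].
      intros i Hi. apply Hsupp, Hv in Hi.
      pose proof (lab_ab1 N n1 n2 HN ltac:(lia) ltac:(lia) c (a-1)%Z (b-1)%Z) as E1.
      replace (a - 1 + 1)%Z with a in E1 by ring. replace (b - 1 + 1)%Z with b in E1 by ring.
      replace (a - 1 + 1)%Z with a by ring. replace (b - 1 + 1)%Z with b by ring.
      assert (E2 : lab c ((a - 1)%Z, (b - 1)%Z) = ((k + n3) mod N)%nat).
      { rewrite El in E1. rewrite E1. rewrite Nat.Div0.add_mod_idemp_l.
        replace (lab c ((a - 1)%Z, (b - 1)%Z) + n1 + n2 + n3)%nat with (lab c ((a - 1)%Z, (b - 1)%Z) + 1 * N)%nat by lia.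
        rewrite Nat.Div0.mod_add. symmetry. apply Nat.mod_small. apply lab_lt. apply HN. }
      rewrite E2, El. tauto.
  - destruct (reach k Hk) as [c [a [b [Hc El]]]].
    destruct (up_ok x c a b Hn Hs) as [s' [t' E]]; [|exists c, s', t'; auto].
    intros i Hi. apply Hsupp, Hv in Hi. left. rewrite El; auto.
Qed.

Definition th1 (s t : R) : R := IZR v * s - IZR u * t.
Definition th2 (s t : R) : R := (IZR p * s + IZR q * t) / IZR M.
Definition Tm (c : nat) (s t : R) : tori_pt :=
  (c, (cos (2 * PI * th1 s t), sin (2 * PI * th1 s t), cos (2 * PI * th2 s t), sin (2 * PI * th2 s t))).
Definition Lx (t1 t2 : R) : R := t1 * IZR q + t2 * IZR (M * u).
Definition Ly (t1 t2 : R) : R := t1 * IZR (- p) + t2 * IZR (M * v).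

Lemma Euv_R : IZR u * IZR p + IZR v * IZR q = 1.
Proof. rewrite <- !mult_IZR, <- plus_IZR, Euv. auto. Qed.

Lemma MR : 0 < IZR M. Proof. apply IZR_lt. auto. Qed.

Lemma th1_L t1 t2 : th1 (Lx t1 t2) (Ly t1 t2) = t1.
Proof. unfold th1, Lx, Ly. rewrite !mult_IZR, opp_IZR. pose proof Euv_R.
  apply Rminus_diag_uniq.
  replace (IZR v * (t1 * IZR q + t2 * (IZR M * IZR u)) - IZR u * (t1 * - IZR p + t2 * (IZR M * IZR v)) - t1)
    with (t1 * (IZR u * IZR p + IZR v * IZR q - 1)) by ring. rewrite H. ring. Qed.

Lemma th2_L t1 t2 : th2 (Lx t1 t2) (Ly t1 t2) = t2.
Proof. unfold th2, Lx, Ly. rewrite !mult_IZR, opp_IZR. pose proof Euv_R. pose proof MR.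
  apply Rminus_diag_uniq.
  replace ((IZR p * (t1 * IZR q + t2 * (IZR M * IZR u)) + IZR q * (t1 * - IZR p + t2 * (IZR M * IZR v))) / IZR M - t2)
    with (t2 * (IZR u * IZR p + IZR v * IZR q - 1)) by (field; lra). rewrite H. ring. Qed.

Lemma L_th s t : Lx (th1 s t) (th2 s t) = s /\ Ly (th1 s t) (th2 s t) = t.
Proof. unfold th1, th2, Lx, Ly. rewrite !mult_IZR, opp_IZR. pose proof Euv_R. pose proof MR. split.
  - apply Rminus_diag_uniq.
    replace ((IZR v * s - IZR u * t) * IZR q + (IZR p * s + IZR q * t) / IZR M * (IZR M * IZR u) - s)
      with (s * (IZR u * IZR p + IZR v * IZR q - 1)) by (field; lra). rewrite H. ring.
  - apply Rminus_diag_uniq.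
    replace ((IZR v * s - IZR u * t) * - IZR p + (IZR p * s + IZR q * t) / IZR M * (IZR M * IZR v) - t)
      with (t * (IZR u * IZR p + IZR v * IZR q - 1)) by (field; lra). rewrite H. ring. Qed.

Lemma Tm_period c s t l1 l2 : ((l1 * Z.of_nat n1 + l2 * Z.of_nat n2) mod Z.of_nat N = 0)%Z ->
  Tm c (s + IZR l1) (t + IZR l2) = Tm c s t.
Proof. intros H. destruct (Dec l1 l2 H) as [i [j [E1 E2]]].
  assert (A1 : th1 (s + IZR l1) (t + IZR l2) = th1 s t + IZR i).
  { unfold th1. rewrite E1, E2. rewrite !plus_IZR, !mult_IZR, opp_IZR. pose proof Euv_R.
    apply Rminus_diag_uniq.
    replace (IZR v * (s + (IZR i * IZR q + IZR j * (IZR M * IZR u))) - IZR u * (t + (IZR i * - IZR p + IZR j * (IZR M * IZR v))) -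
      (IZR v * s - IZR u * t + IZR i)) with (IZR i * (IZR u * IZR p + IZR v * IZR q - 1)) by ring.
    rewrite H0; ring. }
  assert (A2 : th2 (s + IZR l1) (t + IZR l2) = th2 s t + IZR j).
  { unfold th2. rewrite E1, E2. rewrite !plus_IZR, !mult_IZR, opp_IZR. pose proof Euv_R. pose proof MR.
    apply Rminus_diag_uniq.
    replace ((IZR p * (s + (IZR i * IZR q + IZR j * (IZR M * IZR u))) + IZR q * (t + (IZR i * - IZR p + IZR j * (IZR M * IZR v)))) / IZR M -
      ((IZR p * s + IZR q * t) / IZR M + IZR j)) with (IZR j * (IZR u * IZR p + IZR v * IZR q - 1)) by (field; lra).
    rewrite H0; ring. }
  unfold Tm. rewrite A1, A2. rewrite !Rmult_plus_distr_l, !cos_Zper, !sin_Zper. auto. Qed.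

Lemma ang_exact phi : exists m : Z, ang (cos phi) (sin phi) = phi + 2 * PI * IZR m.
Proof. assert (Hc : cos phi * cos phi + sin phi * sin phi = 1) by (pose proof (sin2_cos2 phi); unfold Rsqr in *; lra).
  destruct (ANG (ang (cos phi) (sin phi)) phi) as [m Hm].
  rewrite ang_cos, ang_sin in Hm by auto.
  exists m. replace ((cos phi - cos phi) * (cos phi - cos phi) + (sin phi - sin phi) * (sin phi - sin phi)) with 0 in Hm by ring.
  nra. Qed.

Lemma lat_neg l1 l2 : ((l1 * Z.of_nat n1 + l2 * Z.of_nat n2) mod Z.of_nat N = 0)%Z ->
  (((- l1) * Z.of_nat n1 + (- l2) * Z.of_nat n2) mod Z.of_nat N = 0)%Z.
Proof. intros H. replace ((- l1) * Z.of_nat n1 + (- l2) * Z.of_nat n2)%Z with (- (l1 * Z.of_nat n1 + l2 * Z.of_nat n2))%Z by ring.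
  apply Z.mod_opp_l_z; auto. lia. Qed.

Lemma lat_L m1 m2 : (((m1 * q + m2 * (M * u)) * Z.of_nat n1 + (m1 * (- p) + m2 * (M * v)) * Z.of_nat n2) mod Z.of_nat N = 0)%Z.
Proof. replace ((m1 * q + m2 * (M * u)) * Z.of_nat n1 + (m1 * (- p) + m2 * (M * v)) * Z.of_nat n2)%Z
   with (m2 * (M * u * Z.of_nat n1 + M * v * Z.of_nat n2))%Z by (rewrite Ep, Eq; ring).
  rewrite Z.mul_mod, Lb2 by lia. rewrite Z.mul_0_r. apply Z.mod_0_l. lia. Qed.


Definition Ls (y : tori_pt) : R * R :=
  match y with (_, (a, b, c, d)) =>
    (Lx (ang a b / (2 * PI)) (ang c d / (2 * PI)), Ly (ang a b / (2 * PI)) (ang c d / (2 * PI))) end.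
Definition hm (y : tori_pt) : nat -> R := Pm (fst y) (fst (Ls y)) (snd (Ls y)).
Definition PP (x : nat -> R) (w : nat * R * R) : Prop :=
  (fst (fst w) < g)%nat /\ forall i, Pm (fst (fst w)) (snd (fst w)) (snd w) i = x i.
Definition fm (x : nat -> R) : tori_pt :=
  let w := epsilon (inhabits (0%nat, 0, 0)) (PP x) in Tm (fst (fst w)) (snd (fst w)) (snd w).

Lemma fm_spec x : realization N n1 n2 n3 x ->
  exists c s t, (c < g)%nat /\ (forall i, Pm c s t i = x i) /\ fm x = Tm c s t.
Proof. intros Hx. destruct (surj x Hx) as [c [s [t [Hc Hp]]]].
  assert (PP x (epsilon (inhabits (0%nat, 0, 0)) (PP x))).
  { apply epsilon_spec. exists (c, s, t). split; auto. }
  unfold fm. destruct (epsilon (inhabits (0%nat, 0, 0)) (PP x)) as [[c' s'] t'].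
  destruct H as [H1 H2]. simpl in *. exists c', s', t'. auto. Qed.

Lemma fm_tori x : realization N n1 n2 n3 x -> tori (Nat.gcd n1 (Nat.gcd n2 n3)) (fm x).
Proof. intros Hx. destruct (fm_spec x Hx) as [c [s [t [Hc [_ E]]]]]. rewrite E. unfold Tm, tori.
  pose proof (sin2_cos2 (2 * PI * th1 s t)). pose proof (sin2_cos2 (2 * PI * th2 s t)). unfold Rsqr in *.
  unfold g in Hc. repeat split; auto; lra. Qed.

Lemma hm_real y : realization N n1 n2 n3 (hm y).
Proof. apply Pm_real; lia. Qed.

Lemma hf x : realization N n1 n2 n3 x -> hm (fm x) = x.
Proof. intros Hx. destruct (fm_spec x Hx) as [c [s [t [Hc [Hp E]]]]]. rewrite E.
  apply functional_extensionality. intros i. rewrite <- Hp. unfold hm, Ls, Tm. simpl.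
  destruct (ang_exact (2 * PI * th1 s t)) as [m1 E1].
  destruct (ang_exact (2 * PI * th2 s t)) as [m2 E2].
  rewrite E1, E2. pose proof PI_RGT_0.
  replace ((2 * PI * th1 s t + 2 * PI * IZR m1) / (2 * PI)) with (th1 s t + IZR m1) by (field; lra).
  replace ((2 * PI * th2 s t + 2 * PI * IZR m2) / (2 * PI)) with (th2 s t + IZR m2) by (field; lra).
  destruct (L_th s t) as [L1 L2].
  replace (Lx (th1 s t + IZR m1) (th2 s t + IZR m2)) with (s + IZR (m1 * q + m2 * (M * u))).
  replace (Ly (th1 s t + IZR m1) (th2 s t + IZR m2)) with (t + IZR (m1 * (- p) + m2 * (M * v))).
  apply Pm_shift. apply lat_L.
  - rewrite <- L2 at 1. unfold Ly. rewrite !plus_IZR, !mult_IZR, opp_IZR. ring.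
  - rewrite <- L1 at 1. unfold Lx. rewrite !plus_IZR, !mult_IZR. ring.
Qed.

Lemma fh y : tori (Nat.gcd n1 (Nat.gcd n2 n3)) y -> fm (hm y) = y.
Proof. destruct y as [k [[[a b] c] d]]. intros [Hk [Hab Hcd]].
  destruct (fm_spec (hm (k, (a, b, c, d))) (hm_real _)) as [c' [s' [t' [Hc' [Hp E]]]]].
  rewrite E. unfold hm in Hp. simpl in Hp.
  destruct (KEY c' k s' t' _ _ Hc' Hk Hp) as [Ec [l1 [l2 [Hl [E1 E2]]]]].
  subst c'.
  assert (Tm k s' t' = Tm k (Lx (ang a b / (2 * PI)) (ang c d / (2 * PI))) (Ly (ang a b / (2 * PI)) (ang c d / (2 * PI)))).
  { rewrite E1, E2. symmetry. apply Tm_period; auto. }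
  rewrite H. unfold Tm. rewrite th1_L, th2_L. pose proof PI_RGT_0.
  replace (2 * PI * (ang a b / (2 * PI))) with (ang a b) by (field; lra).
  replace (2 * PI * (ang c d / (2 * PI))) with (ang c d) by (field; lra).
  rewrite !ang_cos, !ang_sin by auto. auto. Qed.


Definition KT : R := 4 * PI * (Rabs (IZR u) + Rabs (IZR v) + Rabs (IZR p) + Rabs (IZR q)).

Lemma KT_nonneg : 0 <= KT.
Proof. unfold KT. pose proof PI_RGT_0. pose proof (Rabs_pos (IZR u)). pose proof (Rabs_pos (IZR v)).
  pose proof (Rabs_pos (IZR p)). pose proof (Rabs_pos (IZR q)). nra. Qed.

Lemma TLIP c s t s' t' : tori_dist (Tm c s t) (Tm c s' t') <= KT * (Rabs (s - s') + Rabs (t - t')).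
Proof. unfold Tm, tori_dist. rewrite Nat.eqb_refl.
  pose proof PI_RGT_0. pose proof MR.
  set (av := Rabs (IZR v)). set (au := Rabs (IZR u)). set (ap := Rabs (IZR p)). set (aq := Rabs (IZR q)).
  set (ds := Rabs (s - s')). set (dt := Rabs (t - t')).
  assert (A1 : Rabs (2 * PI * th1 s t - 2 * PI * th1 s' t') <= 2 * PI * (av * ds + au * dt)).
  { unfold th1. replace (2 * PI * (IZR v * s - IZR u * t) - 2 * PI * (IZR v * s' - IZR u * t'))
      with ((2 * PI) * (IZR v * (s - s') + - (IZR u * (t - t')))) by ring.
    rewrite Rabs_mult, (Rabs_right (2 * PI)) by lra. apply Rmult_le_compat_l. lra.
    eapply Rle_trans. apply Rabs_triang. rewrite Rabs_Ropp, !Rabs_mult. fold av au ds dt. lra. }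
  assert (A2 : Rabs (2 * PI * th2 s t - 2 * PI * th2 s' t') <= 2 * PI * (ap * ds + aq * dt)).
  { unfold th2. replace (2 * PI * ((IZR p * s + IZR q * t) / IZR M) - 2 * PI * ((IZR p * s' + IZR q * t') / IZR M))
      with ((2 * PI) * ((IZR p * (s - s') + IZR q * (t - t')) / IZR M)) by (field; lra).
    rewrite Rabs_mult, (Rabs_right (2 * PI)) by lra. apply Rmult_le_compat_l. lra.
    assert (1 <= IZR M) by (apply IZR_le; lia).
    unfold Rdiv. rewrite Rabs_mult, (Rabs_right (/ IZR M)) by (apply Rle_ge; left; apply Rinv_0_lt_compat; lra).
    assert (Rabs (IZR p * (s - s') + IZR q * (t - t')) <= ap * ds + aq * dt).
    { eapply Rle_trans. apply Rabs_triang. rewrite !Rabs_mult. fold ap aq ds dt. lra. }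
    assert (/ IZR M <= 1). { rewrite <- Rinv_1. apply Rinv_le_contravar; lra. }
    assert (0 < / IZR M) by (apply Rinv_0_lt_compat; lra).
    pose proof (Rabs_pos (IZR p * (s - s') + IZR q * (t - t'))). nra. }
  pose proof (cos_lip (2 * PI * th1 s t) (2 * PI * th1 s' t')).
  pose proof (sin_lip (2 * PI * th1 s t) (2 * PI * th1 s' t')).
  pose proof (cos_lip (2 * PI * th2 s t) (2 * PI * th2 s' t')).
  pose proof (sin_lip (2 * PI * th2 s t) (2 * PI * th2 s' t')).
  unfold KT. fold au av ap aq.
  assert (0 <= av) by apply Rabs_pos. assert (0 <= au) by apply Rabs_pos.
  assert (0 <= ap) by apply Rabs_pos. assert (0 <= aq) by apply Rabs_pos.
  assert (0 <= ds) by apply Rabs_pos. assert (0 <= dt) by apply Rabs_pos.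
  assert (0 <= PI * (au * ds)) by (apply Rmult_le_pos; [lra|apply Rmult_le_pos; auto]).
  assert (0 <= PI * (aq * ds)) by (apply Rmult_le_pos; [lra|apply Rmult_le_pos; auto]).
  assert (0 <= PI * (av * dt)) by (apply Rmult_le_pos; [lra|apply Rmult_le_pos; auto]).
  assert (0 <= PI * (ap * dt)) by (apply Rmult_le_pos; [lra|apply Rmult_le_pos; auto]).
  replace (4 * PI * (au + av + ap + aq) * (ds + dt)) with
    (2 * (2 * PI * (av * ds + au * dt)) + 2 * (2 * PI * (ap * ds + aq * dt)) +
     4 * (PI * (au * ds)) + 4 * (PI * (aq * ds)) + 4 * (PI * (av * dt)) + 4 * (PI * (ap * dt))) by ring.
  lra. Qed.


Lemma f_cont : cont_on (distN N) tori_dist (realization N n1 n2 n3) fm.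
Proof. intros x Hx eps Heps.
  destruct (fm_spec x Hx) as [c [s [t [Hc [Hp E]]]]].
  destruct (exists_pos c s t) as [x0 [y0 Hmu]].
  set (mu := hat (s - IZR x0) (t - IZR y0)) in *.
  set (i0 := lab c (x0, y0)).
  assert (Hxi0 : x i0 = mu).
  { rewrite <- Hp. unfold i0. replace (x0, y0) with ((x0+0)%Z,(y0+0)%Z) by (f_equal; ring).
    rewrite star_eval by (auto; simpl; lia). rewrite !Z.add_0_r. auto. }
  pose proof KT_nonneg.
  exists (Rmin mu (eps / (8 * KT + 1))). split.
  { apply Rmin_pos; auto. apply Rdiv_lt_0_compat; lra. }
  intros y Hy Hd.
  assert (Hd1 : distN N x y < mu) by (eapply Rlt_le_trans; [apply Hd| apply Rmin_l]).
  assert (Hd2 : distN N x y < eps / (8 * KT + 1)) by (eapply Rlt_le_trans; [apply Hd| apply Rmin_r]).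
  destruct (fm_spec y Hy) as [c' [s' [t' [Hc' [Hp' E']]]]].
  assert (Hyi0 : 0 < Pm c' s' t' i0).
  { rewrite Hp'. pose proof (dist_term N x y i0 (lab_lt N n1 n2 HN c _)). apply abs_le2 in H0. lra. }
  destruct (pos_label c' s' t' _ Hyi0) as [x0' [y0' [El Hxy']]].
  assert (EZ : labZ c' (x0',y0') = labZ c (x0,y0)).
  { rewrite <- !(lab_Z N n1 n2 HN). rewrite El. auto. }
  assert (Ecc : c = c').
  { pose proof (labZ_comp c (x0,y0) Hc). pose proof (labZ_comp c' (x0',y0') Hc'). rewrite EZ in H1. lia. }
  subst c'.
  assert (Lsh : forall d1 d2, lab c ((x0' + d1)%Z, (y0' + d2)%Z) = lab c ((x0 + d1)%Z, (y0 + d2)%Z)).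
  { intros d1 d2. unfold SC.lab. rewrite !lab_shiftZ, EZ. auto. }
  destruct (star_coord c s t x0 y0 Hmu) as [S1 S2].
  destruct (star_coord c s' t' x0' y0' Hxy') as [S1' S2'].
  rewrite !Lsh in S1', S2'. rewrite !Hp in S1, S2. rewrite !Hp' in S1', S2'.
  assert (DT : forall d1 d2, Rabs (x (lab c ((x0 + d1)%Z, (y0 + d2)%Z)) - y (lab c ((x0 + d1)%Z, (y0 + d2)%Z))) <= distN N x y).
  { intros. apply dist_term. apply lab_lt. apply HN. }
  pose proof (DT 1%Z 0%Z). pose proof (DT (-1)%Z 0%Z). pose proof (DT 1%Z 1%Z). pose proof (DT (-1)%Z (-1)%Z).
  pose proof (DT 0%Z 1%Z). pose proof (DT 0%Z (-1)%Z).
  set (l1 := (x0' - x0)%Z). set (l2 := (y0' - y0)%Z).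
  assert (Hl : ((l1 * Z.of_nat n1 + l2 * Z.of_nat n2) mod Z.of_nat N = 0)%Z).
  { apply labZ_diff in EZ. simpl in EZ. auto. }
  assert (E'' : fm y = Tm c (s' - IZR l1) (t' - IZR l2)).
  { rewrite E'. rewrite <- (Tm_period c (s' - IZR l1) (t' - IZR l2) l1 l2 Hl). f_equal; ring. }
  rewrite E, E''.
  eapply Rle_lt_trans. apply TLIP.
  assert (B1 : Rabs (s - (s' - IZR l1)) <= 4 * distN N x y).
  { unfold l1. rewrite minus_IZR.
    replace (s - (s' - (IZR x0' - IZR x0))) with
      (- ((s' - IZR x0') - (s - IZR x0))) by ring. rewrite Rabs_Ropp. rewrite S1, S1'.
    repeat match goal with H : Rabs (x ?a - y ?a) <= _ |- _ => revert H end.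
    set (A1 := x (lab c ((x0 + 1)%Z, (y0 + 0)%Z))). set (A2 := x (lab c ((x0 + -1)%Z, (y0 + 0)%Z))).
    set (A3 := x (lab c ((x0 + 1)%Z, (y0 + 1)%Z))). set (A4 := x (lab c ((x0 + -1)%Z, (y0 + -1)%Z))).
    set (B1 := y (lab c ((x0 + 1)%Z, (y0 + 0)%Z))). set (B2 := y (lab c ((x0 + -1)%Z, (y0 + 0)%Z))).
    set (B3 := y (lab c ((x0 + 1)%Z, (y0 + 1)%Z))). set (B4 := y (lab c ((x0 + -1)%Z, (y0 + -1)%Z))).
    intros. repeat match goal with |- context [Rabs ?z] => destruct (Rcase_abs z); [rewrite (Rabs_left z) by auto | rewrite (Rabs_right z) by auto] end;
    repeat match goal with H : context [Rabs ?z] |- _ => apply abs_le2 in H end; lra. }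
  assert (B2 : Rabs (t - (t' - IZR l2)) <= 4 * distN N x y).
  { unfold l2. rewrite minus_IZR.
    replace (t - (t' - (IZR y0' - IZR y0))) with
      (- ((t' - IZR y0') - (t - IZR y0))) by ring. rewrite Rabs_Ropp. rewrite S2, S2'.
    repeat match goal with H : Rabs (x ?a - y ?a) <= _ |- _ => revert H end.
    intros. repeat match goal with |- context [Rabs ?z] => destruct (Rcase_abs z); [rewrite (Rabs_left z) by auto | rewrite (Rabs_right z) by auto] end;
    repeat match goal with H : context [Rabs ?z] |- _ => apply abs_le2 in H end; lra. }
  assert (0 <= distN N x y) by (unfold distN; apply rsum_nonneg; intros; apply Rabs_pos).
  assert (KT * (Rabs (s - (s' - IZR l1)) + Rabs (t - (t' - IZR l2))) <= KT * (8 * distN N x y)).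
  { apply Rmult_le_compat_l; auto. lra. }
  assert (KT * (8 * distN N x y) < eps).
  { assert (8 * KT * distN N x y <= 8 * KT * (eps / (8 * KT + 1))) by (apply Rmult_le_compat_l; lra).
    assert (8 * KT * (eps / (8 * KT + 1)) < eps).
    { apply (Rmult_lt_reg_r (8 * KT + 1)). lra. field_simplify; lra. }
    lra. }
  lra.
Qed.


Definition KB : R := 1 + Rabs (IZR q) + Rabs (IZR (M * u)) + Rabs (IZR p) + Rabs (IZR (M * v)).

Lemma lin_bound e1 e2 (A B d : R) : Rabs e1 < d -> Rabs e2 < d ->
  Rabs (e1 * A + e2 * B) <= d * (Rabs A + Rabs B).
Proof. intros. eapply Rle_trans. apply Rabs_triang. rewrite !Rabs_mult.
  pose proof (Rabs_pos A). pose proof (Rabs_pos B). nra. Qed.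

Lemma h_cont : cont_on tori_dist (distN N) (tori (Nat.gcd n1 (Nat.gcd n2 n3))) hm.
Proof. intros [k [[[a b] c] d]] [Hk [Hab Hcd]] eps Heps.
  assert (KBp : 1 <= KB) by (unfold KB; pose proof (Rabs_pos (IZR q)); pose proof (Rabs_pos (IZR (M*u)));
     pose proof (Rabs_pos (IZR p)); pose proof (Rabs_pos (IZR (M*v))); lra).
  set (del := Rmin (1 / (4 * KB)) (eps / (64 * KB))).
  assert (Hdel : 0 < del) by (apply Rmin_pos; apply Rdiv_lt_0_compat; lra).
  exists del. split; auto.
  intros [k' [[[a' b'] c'] d']] [Hk' [Hab' Hcd']] Hd.
  unfold tori_dist in Hd.
  pose proof (Rabs_pos (a - a')). pose proof (Rabs_pos (b - b')). pose proof (Rabs_pos (c - c')). pose proof (Rabs_pos (d - d')).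
  assert (del <= 1 / (4 * KB)) by apply Rmin_l. assert (del <= eps / (64 * KB)) by apply Rmin_r.
  assert (1 / (4 * KB) <= 1 / 4) by (unfold Rdiv; rewrite !Rmult_1_l; apply Rinv_le_contravar; lra).
  destruct (Nat.eqb_spec k k') as [Ek|Ek]; [|lra]. subst k'.
  destruct (ANG_bound a b a' b' del Hab Hab' ltac:(lra)) as [m1 Hm1].
  destruct (ANG_bound c d c' d' del Hcd Hcd' ltac:(lra)) as [m2 Hm2].
  unfold hm, Ls; simpl.
  set (t1 := ang a b / (2 * PI)). set (t2 := ang c d / (2 * PI)).
  set (t1' := ang a' b' / (2 * PI)). set (t2' := ang c' d' / (2 * PI)).
  set (e1 := t1' - t1 - IZR m1) in *. set (e2 := t2' - t2 - IZR m2) in *.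
  set (l1 := (m1 * q + m2 * (M * u))%Z). set (l2 := (m1 * (- p) + m2 * (M * v))%Z).
  set (s'' := Lx t1' t2' - IZR l1). set (t'' := Ly t1' t2' - IZR l2).
  assert (EP : Pm k (Lx t1' t2') (Ly t1' t2') = Pm k s'' t'').
  { apply functional_extensionality. intros i.
    rewrite <- (Pm_shift k s'' t'' l1 l2 (lat_L m1 m2) i). unfold s'', t''. f_equal; ring. }
  rewrite EP.
  assert (Ds : s'' - Lx t1 t2 = e1 * IZR q + e2 * IZR (M * u)).
  { unfold s'', Lx, l1, e1, e2. rewrite plus_IZR, (mult_IZR m1), (mult_IZR m2). ring. }
  assert (Dt : t'' - Ly t1 t2 = e1 * IZR (- p) + e2 * IZR (M * v)).
  { unfold t'', Ly, l2, e1, e2. rewrite plus_IZR, (mult_IZR m1), (mult_IZR m2). ring. }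
  assert (B1 : Rabs (Lx t1 t2 - s'') <= del * (Rabs (IZR q) + Rabs (IZR (M * u)))).
  { rewrite Rabs_minus_sym, Ds. apply lin_bound; auto. }
  assert (B2 : Rabs (Ly t1 t2 - t'') <= del * (Rabs (IZR p) + Rabs (IZR (M * v)))).
  { rewrite Rabs_minus_sym, Dt. eapply Rle_trans; [apply lin_bound; eauto|]. rewrite opp_IZR, Rabs_Ropp. lra. }
  assert (SB : del * (Rabs (IZR q) + Rabs (IZR (M * u))) + del * (Rabs (IZR p) + Rabs (IZR (M * v))) <= del * KB).
  { unfold KB. nra. }
  assert (del * KB <= 1/4).
  { assert (HH : del * KB <= 1 / (4 * KB) * KB) by (apply Rmult_le_compat_r; lra).
    replace (1 / (4 * KB) * KB) with (1/4) in HH by (field; lra). lra. }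
  assert (del * KB <= eps / 64).
  { assert (HH : del * KB <= eps / (64 * KB) * KB) by (apply Rmult_le_compat_r; lra).
    replace (eps / (64 * KB) * KB) with (eps / 64) in HH by (field; lra). lra. }
  pose proof (Rabs_pos (Lx t1 t2 - s'')). pose proof (Rabs_pos (Ly t1 t2 - t'')).
  eapply Rle_lt_trans. apply LIP. apply HN. lra. lra. lra.
Qed.


Lemma main_homeo : homeomorphic (distN N) tori_dist (realization N n1 n2 n3) (tori (Nat.gcd n1 (Nat.gcd n2 n3))).
Proof. exists fm, hm. split; [exact fm_tori|]. split; [intros; apply hm_real|].
  split; [exact hf|]. split; [exact fh|]. split; [exact f_cont| exact h_cont]. Qed.

End Main.


End SF.
Import SF.

Open Scope R_scope.

Theorem theorem6p5 (N n1 n2 n3 : nat) :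
  (1 <= n1)%nat -> (n1 < n2)%nat -> (n2 < n3)%nat -> (n3 < N)%nat ->
  (n1 + n2 + n3 = N)%nat -> (2 * n3 <> N)%nat ->
  homeomorphic (distN N) tori_dist (realization N n1 n2 n3)
    (tori (Nat.gcd n1 (Nat.gcd n2 n3))).
Proof. intros H1 H2 H3 H4 H5 H6.
  destruct (NT_exists N n1 n2 n3 H1 H2 H3 H5) as [gz [e [p [q [u [v [M [Egz [gzpos [gzn1 [gzn2 [EM [Mpos [Ep [Eq [Euv [Bez [Lb2 Dec]]]]]]]]]]]]]]]]]].
  eapply main_homeo; eauto.
Qed.
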